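(* Assume (A1)–(A4). Let $\mathbf v\in C^1([0,T]\times\overline\Omega)^d$ satisfy $\mathrm{div}_x\mathbf v=0$ in $Q$ and $\mathbf v\cdot\mathbf n=0$ on $(0,T)\times\partial\Omega$. Let $\psi:[0,T]\times\overline\Omega\times[r_0,\infty)\to\mathbb{R}$ and $\phi:[0,T]\times\overline\Omega\to\mathbb{R}$ be regular in the sense below, satisfy the Neumann conditions $\nabla_x\psi\cdot\mathbf n=0$, $\nabla_x\phi\cdot\mathbf n=0$ on $\partial\Omega$, initial conditions $\psi(0)=\psi_0\ge0$, $\phi(0)=\phi_0\ge0$, and (almost everywhere) the modified system $$\partial_t\psi+\mathbf v\cdot\nabla_x\psi-A(r)\Delta_x\psi=-\beta(r,\mathbf v,\mathbf D_x\mathbf v)\psi-\tau(r)\phi\,\partial_r\psi_++2\int_r^\infty\beta(\tilde r,\mathbf v,\mathbf D_x\mathbf v)\kappa(r,\tilde r)\psi_+(t,x,\tilde r)\,d\tilde r,$$ $$\partial_t\phi+\mathbf v\cdot\nabla_x\phi-A_0\Delta_x\phi=-\phi\int_{r_0}^\infty\partial_r(r\tau(r))\psi_+\,dr+2\int_0^{r_0}r\int_{r_0}^\infty\beta(\tilde r,\mathbf v,\mathbf D_x\mathbf v)\kappa(r,\tilde r)\psi_+(t,x,\tilde r)\,d\tilde r\,dr.$$ Then $\psi\ge0$ and $\phi\ge0$ almost everywhere.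
   Context: Fix $d\in\{2,3\}$, $T>0$, a bounded domain $\Omega\subset\mathbb{R}^d$ with $\mathcal C^{1,1}$ boundary and unit outward normal $\mathbf n$, $Q:=(0,T)\times\Omega$, $r_0>0$, constants $K>0$, $A_0>0$. $s_+:=\max(s,0)$. $\mathbf D_x\mathbf v:=\frac12(\nabla_x\mathbf v+(\nabla_x\mathbf v)^T)$ and $\beta(r,\mathbf v,\mathbf D_x\mathbf v)$ means $\beta(r,\mathbf v(t,x),\mathbf D_x\mathbf v(t,x))$. Regularity: $\psi,\partial_t\psi,\partial_r\psi,\nabla_x\psi,\nabla_x^2\psi$ and $\phi,\partial_t\phi,\nabla_x\phi,\nabla_x^2\phi$ are continuous on their closed domains, and for every $m\ge0$ the function $(1+r)^m(|\psi|+|\partial_t\psi|+|\partial_r\psi|+|\nabla_x\psi|+|\nabla_x^2\psi|)$ is bounded on $[0,T]\times\overline\Omega\times[r_0,\infty)$. (A1) $A:(r_0,\infty)\to(0,\infty)$ continuous, nonincreasing, $\lim_{r\to\infty}A(r)=0$. (A2) $\tau:[r_0,\infty)\to[0,\infty)$ nondecreasing, bounded, globally Lipschitz, $\tau(r_0)=0$, $\tau'(r_0)>0$, $K^{-1}r_0\le\tau(r)+r\tau'(r)$ and $\tau(r)+\tau'(r)+r\tau'(r)+\tau(r)/r\le K$. (A3) $\beta:(r_0,\infty)\times\mathbb{R}^d\times\mathbb{R}^{d\times d}\to\mathbb{R}$ smooth, increasing in $r$, $0<\beta\le K$; $\eta(r):=\sup_{\mathbf u,\mathbf D}\partial_r\beta(r,\mathbf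 u,\mathbf D)/\beta(r,\mathbf u,\mathbf D)$ is measurable, nonnegative, $(1+r)\eta(r)\le K$, $\int_{r_0}^\infty\eta\le K$. (A4) $\kappa(r,\tilde r)=1/\tilde r$ if $\tilde r>r_0$ and $0<r<\tilde r$; $\kappa=0$ otherwise. *)

(* Defs.v *)
From Stdlib Require Export Reals Lra List.
Export ListNotations.
Open Scope R_scope.

(** * Points of R^d are represented as [nat -> R]; only coordinates i < d matter. *)

Definition sumd (d : nat) (f : nat -> R) : R :=
  fold_right Rplus 0 (map f (seq 0 d)).

Definition prodd (d : nat) (f : nat -> R) : R :=
  fold_right Rmult 1 (map f (seq 0 d)).

Definition normd (d : nat) (x : nat -> R) : R := sqrt (sumd d (fun i => x i * x i)).

Definition vsub (x y : nat -> R) : nat -> R := fun i => x i - y i.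

Definition inRd (d : nat) (x : nat -> R) : Prop := forall i, (d <= i)%nat -> x i = 0.

Definition inRdd (d : nat) (D : nat -> nat -> R) : Prop :=
  forall i j, (d <= i)%nat \/ (d <= j)%nat -> D i j = 0.

Definition upd (x : nat -> R) (i : nat) (s : R) : nat -> R :=
  fun j => if Nat.eqb j i then s else x j.

Definition has_partial (f : (nat -> R) -> R) (i : nat) (x : nat -> R) (l : R) : Prop :=
  derivable_pt_lim (fun s => f (upd x i s)) (x i) l.

Definition closure (d : nat) (Om : (nat -> R) -> Prop) (x : nat -> R) : Prop :=
  inRd d x /\ forall eps, 0 < eps -> exists y, Om y /\ normd d (vsub x y) < eps.

Definition bdry (d : nat) (Om : (nat -> R) -> Prop) (x : nat -> R) : Prop :=
  closure d Om x /\ ~ Om x.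

Definition bounded_domain (d : nat) (Om : (nat -> R) -> Prop) : Prop :=
  (forall x, Om x -> inRd d x) /\
  (exists x, Om x) /\
  (forall x, Om x -> exists eps, 0 < eps /\
       forall y, inRd d y -> normd d (vsub y x) < eps -> Om y) /\
  (forall x y, Om x -> Om y -> exists g : R -> nat -> R,
       g 0 = x /\ g 1 = y /\ (forall s, 0 <= s <= 1 -> Om (g s)) /\
       (forall i s, 0 <= s <= 1 -> forall eps, 0 < eps -> exists del, 0 < del /\
          forall s', 0 <= s' <= 1 -> Rabs (s' - s) < del -> Rabs (g s' i - g s i) < eps)) /\
  (exists M, forall x, Om x -> normd d x <= M).

(** C^{1,1} boundary with unit outward normal [n]: near every boundary point p,
    Om is locally the sublevel set {F < 0} of a function F whose gradient G
    exists, is Lipschitz and nonvanishing; n = G/|G| on the boundary. *)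
Definition C11_boundary_normal (d : nat) (Om : (nat -> R) -> Prop)
    (n : (nat -> R) -> nat -> R) : Prop :=
  forall p, bdry d Om p ->
    exists rho (F : (nat -> R) -> R) (G : nat -> (nat -> R) -> R) L,
      0 < rho /\
      let B := fun y => inRd d y /\ normd d (vsub y p) < rho in
      (forall y i, B y -> (i < d)%nat -> has_partial F i y (G i y)) /\
      (forall y z i, B y -> B z -> (i < d)%nat ->
          Rabs (G i y - G i z) <= L * normd d (vsub y z)) /\
      (forall y, B y -> 0 < normd d (fun i => G i y)) /\
      (forall y, B y -> (Om y <-> F y < 0)) /\
      (forall q, B q -> bdry d Om q -> forall i, (i < d)%nat ->
          n q i = G i q / normd d (fun j => G j q)).

(** * Lebesgue null sets and "almost everywhere" in R^n (via countable box covers) *)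

Definition null (n : nat) (S : (nat -> R) -> Prop) : Prop :=
  forall eps, 0 < eps -> exists lo hi : nat -> nat -> R,
    (forall k i, lo k i <= hi k i) /\
    (forall z, S z -> exists k, forall i, (i < n)%nat -> lo k i <= z i <= hi k i) /\
    (forall N, sum_f_R0 (fun k => prodd n (fun i => hi k i - lo k i)) N <= eps).

Definition ae_on (n : nat) (D P : (nat -> R) -> Prop) : Prop :=
  null n (fun z => D z /\ ~ P z).

(** coordinates: z = (t, x_0..x_{d-1}, r) *)
Definition zx (d : nat) (z : nat -> R) : nat -> R :=
  fun i => if Nat.ltb i d then z (S i) else 0.

Definition ae_txr (d : nat) (D P : R -> (nat -> R) -> R -> Prop) : Prop :=
  ae_on (S (S d)) (fun z => D (z O) (zx d z) (z (S d)))
                  (fun z => P (z O) (zx d z) (z (S d))).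

Definition ae_tx (d : nat) (D P : R -> (nat -> R) -> Prop) : Prop :=
  ae_on (S d) (fun z => D (z O) (zx d z)) (fun z => P (z O) (zx d z)).

Definition ae_r (D P : R -> Prop) : Prop :=
  ae_on 1 (fun z => D (z O)) (fun z => P (z O)).

(** * Henstock-Kurzweil (gauge) integral *)

(** list of (left end, tag, right end) forming a del-fine tagged partition of [a,b] *)
Fixpoint fine (del : R -> R) (a b : R) (P : list (R * R * R)) : Prop :=
  match P with
  | nil => a = b
  | (u, t, w) :: P' =>
      u = a /\ u <= t <= w /\ t - del t < u /\ w < t + del t /\ fine del w b P'
  end.

Fixpoint rsum (f : R -> R) (P : list (R * R * R)) : R :=
  match P with
  | nil => 0
  | (u, t, w) :: P' => f t * (w - u) + rsum f P'
  end.

Definition HKint (f : R -> R) (a b I : R) : Prop :=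
  a <= b /\ forall eps, 0 < eps -> exists del : R -> R,
    (forall t, a <= t <= b -> 0 < del t) /\
    forall P, fine del a b P -> Rabs (rsum f P - I) < eps.

Definition HKint_inf (f : R -> R) (a I : R) : Prop :=
  (forall b, a <= b -> exists J, HKint f a b J) /\
  (forall eps, 0 < eps -> exists B, forall b J, B <= b -> a <= b -> HKint f a b J ->
       Rabs (J - I) < eps).

Definition cont3_on (d : nat) (S : R -> (nat -> R) -> R -> Prop)
    (f : R -> (nat -> R) -> R -> R) : Prop :=
  forall t x r, S t x r -> forall eps, 0 < eps -> exists del, 0 < del /\
    forall t' x' r', S t' x' r' ->
      Rabs (t' - t) + normd d (vsub x' x) + Rabs (r' - r) < del ->
      Rabs (f t' x' r' - f t x r) < eps.

Definition cont2_on (d : nat) (S : R -> (nat -> R) -> Prop)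
    (f : R -> (nat -> R) -> R) : Prop :=
  forall t x, S t x -> forall eps, 0 < eps -> exists del, 0 < del /\
    forall t' x', S t' x' ->
      Rabs (t' - t) + normd d (vsub x' x) < del ->
      Rabs (f t' x' - f t x) < eps.

Definition cont_on_n (n : nat) (U : (nat -> R) -> Prop) (g : (nat -> R) -> R) : Prop :=
  forall z, U z -> forall eps, 0 < eps -> exists del, 0 < del /\
    forall y, U y -> normd n (vsub y z) < del -> Rabs (g y - g z) < eps.

Definition smooth_on (n : nat) (U : (nat -> R) -> Prop) (f : (nat -> R) -> R) : Prop :=
  exists F : list nat -> (nat -> R) -> R,
    (forall z, U z -> F nil z = f z) /\
    (forall l i z, (i < n)%nat -> U z -> has_partial (F l) i z (F (i :: l) z)) /\
    (forall l, cont_on_n n U (F l)).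

Definition cQ d T Om (t : R) (x : nat -> R) : Prop := 0 <= t <= T /\ closure d Om x.
Definition oQ T (Om : (nat -> R) -> Prop) (t : R) (x : nat -> R) : Prop := 0 < t < T /\ Om x.
Definition cQR d T Om r0 t x (r : R) : Prop := cQ d T Om t x /\ r0 <= r.
Definition oQR T Om r0 t x (r : R) : Prop := oQ T Om t x /\ r0 < r.

(** * Regularity of the unknowns; derivatives are given as continuous extensions *)

(** v in C^1([0,T] x closure Om)^d ; vt i = d_t v_i, vx i j = d_{x_j} v_i *)
Definition reg_v d T Om (v : nat -> R -> (nat -> R) -> R)
    (vt : nat -> R -> (nat -> R) -> R) (vx : nat -> nat -> R -> (nat -> R) -> R) : Prop :=
  (forall i, (i < d)%nat ->
     cont2_on d (cQ d T Om) (v i) /\ cont2_on d (cQ d T Om) (vt i) /\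
     (forall j, (j < d)%nat -> cont2_on d (cQ d T Om) (vx i j))) /\
  (forall i t x, (i < d)%nat -> oQ T Om t x ->
     derivable_pt_lim (fun s => v i s x) t (vt i t x) /\
     forall j, (j < d)%nat -> has_partial (v i t) j x (vx i j t x)).

Definition reg_psi d T Om r0 (psi : R -> (nat -> R) -> R -> R)
    (psit psir : R -> (nat -> R) -> R -> R)
    (psix : nat -> R -> (nat -> R) -> R -> R)
    (psixx : nat -> nat -> R -> (nat -> R) -> R -> R) : Prop :=
  let S := cQR d T Om r0 in
  (cont3_on d S psi /\ cont3_on d S psit /\ cont3_on d S psir /\
   (forall i, (i < d)%nat -> cont3_on d S (psix i)) /\
   (forall i j, (i < d)%nat -> (j < d)%nat -> cont3_on d S (psixx i j))) /\
  (forall t x r, oQR T Om r0 t x r ->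
     derivable_pt_lim (fun s => psi s x r) t (psit t x r) /\
     derivable_pt_lim (fun s => psi t x s) r (psir t x r) /\
     (forall i, (i < d)%nat -> has_partial (fun y => psi t y r) i x (psix i t x r)) /\
     (forall i j, (i < d)%nat -> (j < d)%nat ->
        has_partial (fun y => psix i t y r) j x (psixx i j t x r))) /\
  (forall m, 0 <= m -> exists M, forall t x r, S t x r ->
     Rpower (1 + r) m *
       (Rabs (psi t x r) + Rabs (psit t x r) + Rabs (psir t x r) +
        sumd d (fun i => Rabs (psix i t x r)) +
        sumd d (fun i => sumd d (fun j => Rabs (psixx i j t x r)))) <= M).

Definition reg_phi d T Om (phi phit : R -> (nat -> R) -> R)
    (phix : nat -> R -> (nat -> R) -> R)
    (phixx : nat -> nat -> R -> (nat -> R) -> R) : Prop :=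
  let S := cQ d T Om in
  (cont2_on d S phi /\ cont2_on d S phit /\
   (forall i, (i < d)%nat -> cont2_on d S (phix i)) /\
   (forall i j, (i < d)%nat -> (j < d)%nat -> cont2_on d S (phixx i j))) /\
  (forall t x, oQ T Om t x ->
     derivable_pt_lim (fun s => phi s x) t (phit t x) /\
     (forall i, (i < d)%nat -> has_partial (fun y => phi t y) i x (phix i t x)) /\
     (forall i j, (i < d)%nat -> (j < d)%nat ->
        has_partial (fun y => phix i t y) j x (phixx i j t x))).

Definition pos (s : R) : R := Rmax s 0.

Definition kappa (r0 r rt : R) : R :=
  if Rlt_dec r0 rt then
    (if Rlt_dec 0 r then (if Rlt_dec r rt then / rt else 0) else 0)
  else 0.

Definition vecv d (v : nat -> R -> (nat -> R) -> R) t x : nat -> R :=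
  fun i => if Nat.ltb i d then v i t x else 0.

Definition symgrad d (vx : nat -> nat -> R -> (nat -> R) -> R) t x : nat -> nat -> R :=
  fun i j => if andb (Nat.ltb i d) (Nat.ltb j d)
             then (vx i j t x + vx j i t x) / 2 else 0.

(** beta as a function of z = (r, u, D) in R^{1 + d + d*d} *)
Definition beta_z d (beta : R -> (nat -> R) -> (nat -> nat -> R) -> R) (z : nat -> R) : R :=
  beta (z O) (fun i => if Nat.ltb i d then z (S i) else 0)
       (fun i j => if andb (Nat.ltb i d) (Nat.ltb j d) then z (S d + i * d + j)%nat else 0).

Definition hypA1 (r0 : R) (A : R -> R) : Prop :=
  (forall r, r0 < r -> 0 < A r) /\
  (forall r, r0 < r -> continuity_pt A r) /\
  (forall r s, r0 < r -> r <= s -> A s <= A r) /\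
  (forall eps, 0 < eps -> exists M, forall r, M <= r -> r0 < r -> Rabs (A r) < eps).

(** (A2); [taud] is an a.e. derivative of [tau] *)
Definition hypA2 (r0 K : R) (tau taud : R -> R) : Prop :=
  (forall r, r0 <= r -> 0 <= tau r) /\
  (forall r s, r0 <= r -> r <= s -> tau r <= tau s) /\
  (exists M, forall r, r0 <= r -> Rabs (tau r) <= M) /\
  (exists L, forall r s, r0 <= r -> r0 <= s -> Rabs (tau r - tau s) <= L * Rabs (r - s)) /\
  tau r0 = 0 /\
  (exists l, 0 < l /\ forall eps, 0 < eps -> exists del, 0 < del /\
      forall h, 0 < h < del -> Rabs ((tau (r0 + h) - tau r0) / h - l) < eps) /\
  ae_r (fun r => r0 < r)
    (fun r => derivable_pt_lim tau r (taud r) /\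
              / K * r0 <= tau r + r * taud r /\
              tau r + taud r + r * taud r + tau r / r <= K).

Definition hypA3 (d : nat) (r0 K : R) (beta : R -> (nat -> R) -> (nat -> nat -> R) -> R)
    (eta : R -> R) : Prop :=
  smooth_on (S d + d * d) (fun z => inRd (S d + d * d) z /\ r0 < z O) (beta_z d beta) /\
  (forall r s u D, inRd d u -> inRdd d D -> r0 < r -> r < s -> beta r u D < beta s u D) /\
  (forall r u D, inRd d u -> inRdd d D -> r0 < r -> 0 < beta r u D <= K) /\
  (forall r, r0 < r ->
     is_lub (fun q => exists u D l, inRd d u /\ inRdd d D /\
                derivable_pt_lim (fun s => beta s u D) r l /\ q = l / beta r u D)
            (eta r)) /\
  (forall r, r0 < r -> 0 <= eta r /\ (1 + r) * eta r <= K) /\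
  (forall b, r0 <= b -> exists I, HKint eta r0 b I /\ I <= K).

(* Main.v *)
Require Import Defs.
From Stdlib Require Import Lia ZArith FunctionalExtensionality Classical ClassicalEpsilon.


Lemma seq_S' : forall n, seq 0 (S n) = seq 0 n ++ [n].
Proof. intros n. rewrite seq_S. reflexivity. Qed.

Lemma sumd_S : forall d f, sumd (S d) f = sumd d f + f d.
Proof.
  intros d f. unfold sumd. rewrite seq_S', map_app, fold_right_app. simpl.
  generalize (map f (seq 0 d)). intros l. induction l; simpl; lra.
Qed.

Lemma sumd_0 : forall f, sumd 0 f = 0.
Proof. reflexivity. Qed.

Lemma prodd_S : forall d f, prodd (S d) f = prodd d f * f d.
Proof.
  intros d f. unfold prodd. rewrite seq_S', map_app, fold_right_app. simpl.
  generalize (map f (seq 0 d)). intros l. induction l; simpl; [lra|]. rewrite IHl. ring.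
Qed.

Lemma sumd_ext : forall d f g, (forall i, (i < d)%nat -> f i = g i) -> sumd d f = sumd d g.
Proof.
  induction d; intros f g H; [reflexivity|]. rewrite !sumd_S, (IHd f g), (H d); auto; lia.
Qed.

Lemma prodd_ext : forall d f g, (forall i, (i < d)%nat -> f i = g i) -> prodd d f = prodd d g.
Proof.
  induction d; intros f g H; [reflexivity|]. rewrite !prodd_S, (IHd f g), (H d); auto; lia.
Qed.

Lemma sumd_plus : forall d f g, sumd d (fun i => f i + g i) = sumd d f + sumd d g.
Proof. induction d; intros; [simpl; unfold sumd; simpl; lra|]. rewrite !sumd_S, IHd. ring. Qed.

Lemma sumd_scal : forall d c f, sumd d (fun i => c * f i) = c * sumd d f.
Proof. induction d; intros; [unfold sumd; simpl; ring|]. rewrite !sumd_S, IHd. ring. Qed.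

Lemma sumd_minus : forall d f g, sumd d (fun i => f i - g i) = sumd d f - sumd d g.
Proof. induction d; intros; [unfold sumd; simpl; ring|]. rewrite !sumd_S, IHd. ring. Qed.

Lemma sumd_le : forall d f g, (forall i, (i < d)%nat -> f i <= g i) -> sumd d f <= sumd d g.
Proof. induction d; intros f g H; [unfold sumd; simpl; lra|]. rewrite !sumd_S.
  assert (f d <= g d) by (apply H; lia). assert (sumd d f <= sumd d g) by (apply IHd; intros; apply H; lia). lra. Qed.

Lemma sumd_nonneg : forall d f, (forall i, (i < d)%nat -> 0 <= f i) -> 0 <= sumd d f.
Proof. intros. replace 0 with (sumd d (fun _ => 0)). apply sumd_le; auto.
  induction d; [reflexivity|]. rewrite sumd_S, IHd; [lra|]. intros; apply H; lia. Qed.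

Lemma sumd_zero : forall d f, (forall i, (i < d)%nat -> f i = 0) -> sumd d f = 0.
Proof. induction d; intros f H; [reflexivity|]. rewrite sumd_S, IHd, H; [lra|lia|]. intros; apply H; lia. Qed.

Lemma sumd_abs : forall d f, Rabs (sumd d f) <= sumd d (fun i => Rabs (f i)).
Proof. induction d; intros; [unfold sumd; simpl; rewrite Rabs_R0; lra|]. rewrite !sumd_S.
  eapply Rle_trans; [apply Rabs_triang|]. specialize (IHd f). lra. Qed.

Lemma sumd_term_le : forall d f k, (forall i, (i < d)%nat -> 0 <= f i) -> (k < d)%nat -> f k <= sumd d f.
Proof. induction d; intros f k H Hk; [lia|]. rewrite sumd_S.
  destruct (Nat.eq_dec k d) as [->|Hne].
  - assert (0 <= sumd d f) by (apply sumd_nonneg; intros; apply H; lia). lra.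
  - assert (f k <= sumd d f) by (apply IHd; [intros; apply H; lia| lia]). assert (0 <= f d) by (apply H; lia). lra. Qed.

Definition ebas (k : nat) : nat -> R := fun i => if Nat.eqb i k then 1 else 0.

Lemma sumd_basis : forall d k f, (k < d)%nat -> sumd d (fun i => ebas k i * f i) = f k.
Proof. induction d; intros k f Hk; [lia|]. rewrite sumd_S. unfold ebas at 2.
  destruct (Nat.eqb_spec d k) as [->|Hne].
  - rewrite sumd_zero; [ring|]. intros i Hi. unfold ebas. destruct (Nat.eqb_spec i k); [lia|ring].
  - rewrite IHd; [ring|lia]. Qed.

Lemma prodd_nonneg : forall d f, (forall i, (i < d)%nat -> 0 <= f i) -> 0 <= prodd d f.
Proof. induction d; intros f H; [unfold prodd; simpl; lra|]. rewrite prodd_S.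
  apply Rmult_le_pos; [apply IHd; intros; apply H; lia| apply H; lia]. Qed.

Lemma normd_nonneg : forall d x, 0 <= normd d x.
Proof. intros; apply sqrt_pos. Qed.

Lemma coord_le_normd : forall d x i, (i < d)%nat -> Rabs (x i) <= normd d x.
Proof. intros d x i Hi. unfold normd. rewrite <- sqrt_Rsqr_abs. apply sqrt_le_1_alt.
  unfold Rsqr. apply (sumd_term_le d (fun i => x i * x i)); auto. intros; nra. Qed.

Lemma normd_le_sum : forall d x, normd d x <= sumd d (fun i => Rabs (x i)).
Proof. intros d x. unfold normd.
  assert (H0 : 0 <= sumd d (fun i => Rabs (x i))) by (apply sumd_nonneg; intros; apply Rabs_pos).
  rewrite <- (sqrt_Rsqr _ H0). apply sqrt_le_1_alt. unfold Rsqr.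
  induction d; [unfold sumd; simpl; lra|]. rewrite !sumd_S.
  assert (0 <= sumd d (fun i => Rabs (x i))) by (apply sumd_nonneg; intros; apply Rabs_pos).
  specialize (IHd H). assert (x d * x d = Rabs (x d) * Rabs (x d)).
  { rewrite <- Rabs_mult. rewrite Rabs_pos_eq; nra. }
  pose proof (Rabs_pos (x d)). nra. Qed.

Lemma sumd_const : forall d c, sumd d (fun _ => c) = INR d * c.
Proof. induction d; intros; [unfold sumd; simpl; ring|]. rewrite sumd_S, IHd, S_INR. ring. Qed.

Lemma normd_small : forall d x eps, 0 < eps -> (forall i, (i < d)%nat -> Rabs (x i) < eps / INR (S d)) ->
  normd d x < eps.
Proof. intros d x eps He H. eapply Rle_lt_trans; [apply normd_le_sum|].
  apply Rle_lt_trans with (sumd d (fun _ => eps / INR (S d))).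
  - apply sumd_le; intros; apply Rlt_le; auto.
  - rewrite sumd_const. rewrite S_INR. pose proof (pos_INR d). apply Rmult_lt_reg_r with (INR d + 1); [lra|].
    field_simplify; [nra|lra]. Qed.


Lemma MVT_between : forall f f' a b,
  (forall c, Rmin a b <= c <= Rmax a b -> derivable_pt_lim f c (f' c)) ->
  exists c, Rmin a b <= c <= Rmax a b /\ f b - f a = f' c * (b - a).
Proof.
  intros f f' a b H. destruct (Rtotal_order a b) as [Hab|[Hab|Hab]].
  - destruct (MVT_cor2 f f' a b Hab) as [c [Hc1 Hc2]].
    + intros c Hc; apply H; rewrite Rmin_left, Rmax_right by lra; lra.
    + exists c; rewrite Rmin_left, Rmax_right by lra; split; [lra|auto].
  - subst. exists b. rewrite Rmin_left, Rmax_left by lra. split; [lra|ring].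
  - destruct (MVT_cor2 f f' b a Hab) as [c [Hc1 Hc2]].
    + intros c Hc; apply H; rewrite Rmin_right, Rmax_left by lra; lra.
    + exists c; rewrite Rmin_right, Rmax_left by lra. split; [lra|]. lra.
Qed.

Lemma MVT_upper : forall f df a b M, a < b ->
  (forall eps, 0 < eps -> exists del, 0 < del /\ forall x, a < x < a + del -> Rabs (f x - f a) < eps) ->
  (forall x, a < x <= b -> derivable_pt_lim f x (df x)) ->
  (forall x, a < x <= b -> df x <= M) ->
  f b - f a <= M * (b - a).
Proof.
  intros f df a b M Hab Hc Hd HM.
  apply Rnot_lt_le; intro Hlt.
  set (e := (f b - f a - M * (b - a)) / 4).
  assert (He : 0 < e) by (unfold e; lra).
  destruct (Hc e He) as [del [Hdel Hx]].
  set (eta := Rmin (Rmin (del/2) ((b - a)/2)) (e / (1 + Rabs M))).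
  assert (Heta : 0 < eta).
  { unfold eta. pose proof (Rabs_pos M). repeat apply Rmin_pos; try lra. apply Rdiv_lt_0_compat; lra. }
  assert (Heta1 : eta <= del / 2) by (unfold eta; eapply Rle_trans; [apply Rmin_l|apply Rmin_l]).
  assert (Heta2 : eta <= (b - a) / 2) by (unfold eta; eapply Rle_trans; [apply Rmin_l|apply Rmin_r]).
  assert (Heta3 : eta <= e / (1 + Rabs M)) by (unfold eta; apply Rmin_r).
  destruct (MVT_cor2 f df (a + eta) b) as [c [Hc1 Hc2]]; [lra| intros c Hcc; apply Hd; lra|].
  assert (Hfc : df c <= M) by (apply HM; lra).
  specialize (Hx (a + eta)). assert (Habs : Rabs (f (a + eta) - f a) < e) by (apply Hx; lra).
  assert (HMeta : Rabs M * eta <= e).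
  { pose proof (Rabs_pos M). apply Rmult_le_compat_l with (r := 1 + Rabs M) in Heta3; [|lra].
    field_simplify in Heta3; [|lra]. nra. }
  apply Rabs_def2 in Habs. destruct Habs.
  assert (df c * (b - (a + eta)) <= M * (b - (a + eta))) by (apply Rmult_le_compat_r; lra).
  assert (- (M * eta) <= Rabs M * eta).
  { destruct (Rle_dec 0 M). rewrite Rabs_pos_eq; nra. rewrite Rabs_left; nra. }
  unfold e in *. lra.
Qed.

Lemma MVT_lower : forall f df a b m, a < b ->
  (forall eps, 0 < eps -> exists del, 0 < del /\ forall x, a < x < a + del -> Rabs (f x - f a) < eps) ->
  (forall x, a < x <= b -> derivable_pt_lim f x (df x)) ->
  (forall x, a < x <= b -> m <= df x) ->
  m * (b - a) <= f b - f a.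
Proof.
  intros f df a b m Hab Hc Hd Hm.
  assert (H := MVT_upper (fun x => - f x) (fun x => - df x) a b (- m) Hab).
  assert (- f b - - f a <= - m * (b - a)); [|lra].
  apply H.
  - intros eps He. destruct (Hc eps He) as [del [Hdel Hx]]. exists del; split; auto.
    intros x Hx'. replace (- f x - - f a) with (- (f x - f a)) by ring. rewrite Rabs_Ropp. auto.
  - intros x Hx. apply derivable_pt_lim_opp with (f := f). auto.
  - intros x Hx. specialize (Hm x Hx). lra.
Qed.

Lemma min_delta : forall (d : nat) (P : nat -> R -> Prop),
  (forall i a b, 0 < a -> a <= b -> P i b -> P i a) ->
  (forall i, (i < d)%nat -> exists del, 0 < del /\ P i del) ->
  exists del, 0 < del /\ forall i, (i < d)%nat -> P i del.
Proof.
  induction d; intros P Hmono H.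
  - exists 1; split; [lra|]. intros; lia.
  - destruct (IHd P Hmono) as [d1 [Hd1 H1]]; [intros; apply H; lia|].
    destruct (H d) as [d2 [Hd2 H2]]; [lia|].
    exists (Rmin d1 d2); split; [apply Rmin_pos; auto|].
    intros i Hi. destruct (Nat.eq_dec i d) as [->|Hne].
    + apply Hmono with d2; auto; [apply Rmin_pos; auto| apply Rmin_r].
    + apply Hmono with d1; [apply Rmin_pos; auto| apply Rmin_l| apply H1; lia].
Qed.


Definition vline (y h : nat -> R) (s : R) : nat -> R := fun j => y j + s * h j.
Definition qk (y h : nat -> R) (k : nat) (s : R) : nat -> R :=
  fun j => y j + (if Nat.ltb j k then s * h j else 0).

Definition OpenIn (d : nat) (Om : (nat -> R) -> Prop) : Prop :=
  (forall z, Om z -> inRd d z) /\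
  (forall z, Om z -> exists eps, 0 < eps /\ forall w, inRd d w -> normd d (vsub w z) < eps -> Om w).

Lemma vsub_coord_bound : forall d (z y h : nat -> R) s,
  (forall j, (j < d)%nat -> Rabs (z j - y j) <= Rabs s * Rabs (h j)) ->
  normd d (vsub z y) <= Rabs s * sumd d (fun j => Rabs (h j)).
Proof.
  intros d z y h s H. eapply Rle_trans; [apply normd_le_sum|].
  rewrite <- sumd_scal. apply sumd_le. intros i Hi. unfold vsub. apply H; auto.
Qed.

Lemma derivable_pt_lim_ext_fun : forall f g x l, (forall s, f s = g s) -> derivable_pt_lim f x l -> derivable_pt_lim g x l.
Proof. intros f g x l H Hd. replace g with f; auto. apply functional_extensionality; auto. Qed.

Lemma chain_rule : forall d (Om : (nat -> R) -> Prop) (f : (nat -> R) -> R) (g : nat -> (nat -> R) -> R) y h,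
  OpenIn d Om ->
  (forall z i, Om z -> (i < d)%nat -> has_partial f i z (g i z)) ->
  (forall i, (i < d)%nat -> forall eps, 0 < eps -> exists del, 0 < del /\
      forall z, Om z -> normd d (vsub z y) < del -> Rabs (g i z - g i y) < eps) ->
  Om y -> inRd d h ->
  derivable_pt_lim (fun s => f (vline y h s)) 0 (sumd d (fun i => h i * g i y)).
Proof.
  intros d Om f g y h [Hin Hop] Hp Hc Hy Hh.
  set (HH := sumd d (fun j => Rabs (h j))).
  assert (HH0 : 0 <= HH) by (apply sumd_nonneg; intros; apply Rabs_pos).
  destruct (Hop y Hy) as [rho [Hrho Hball]].
  intros eps Heps.
  set (e' := eps / (2 * (HH + 1))).
  assert (He' : 0 < e') by (unfold e'; apply Rdiv_lt_0_compat; lra).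
  destruct (min_delta d (fun i del => forall z, Om z -> normd d (vsub z y) < del -> Rabs (g i z - g i y) < e'))
    as [dc [Hdc Hdcp]].
  { intros i a b Ha Hab Hb z Hz Hn. apply Hb; auto; lra. }
  { intros i Hi. apply Hc; auto. }
  set (del := Rmin rho dc / (HH + 1)).
  assert (Hdel : 0 < del) by (unfold del; apply Rdiv_lt_0_compat; [apply Rmin_pos|]; lra).
  exists (mkposreal del Hdel). intros s Hs0 Hs. simpl in Hs.
  assert (Hclose : forall z, inRd d z -> (forall j, (j < d)%nat -> Rabs (z j - y j) <= Rabs s * Rabs (h j)) ->
            Om z /\ Rabs (g 0%nat z - g 0%nat y) >= 0 /\ forall i, (i < d)%nat -> Rabs (g i z - g i y) < e').
  { intros z Hz Hzb. pose proof (vsub_coord_bound d z y h s Hzb) as Hn.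
    assert (Hsm : Rabs s * HH < Rmin rho dc).
    { unfold del in Hs. apply Rmult_lt_compat_r with (r := HH + 1) in Hs; [|lra].
      field_simplify in Hs; [|lra]. pose proof (Rabs_pos s). nra. }
    assert (Rmin rho dc <= rho) by apply Rmin_l. assert (Rmin rho dc <= dc) by apply Rmin_r.
    assert (Om z) by (apply Hball; auto; fold HH in Hn; lra).
    split; auto. split; [apply Rle_ge, Rabs_pos|]. intros i Hi. apply Hdcp; auto. fold HH in Hn. lra. }
  assert (Hind : forall k, (k <= d)%nat ->
     Rabs (f (qk y h k s) - f y - s * sumd k (fun i => h i * g i y)) <= Rabs s * sumd k (fun j => Rabs (h j)) * e').
  { induction k; intros Hk.
    - replace (qk y h 0 s) with y. rewrite sumd_0. replace (f y - f y - s * 0) with 0 by ring.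
      rewrite Rabs_R0. rewrite sumd_0. lra.
      apply functional_extensionality; intro j. unfold qk. simpl. ring.
    - specialize (IHk ltac:(lia)).
      assert (Hq : qk y h (S k) s = upd (qk y h k s) k (y k + s * h k)).
      { apply functional_extensionality; intro j. unfold qk, upd.
        destruct (Nat.eqb_spec j k) as [->|Hne].
        - replace (Nat.ltb k (S k)) with true by (symmetry; apply Nat.ltb_lt; lia). reflexivity.
        - destruct (Nat.ltb_spec j (S k)); destruct (Nat.ltb_spec j k); try reflexivity; lia. }
      assert (Hq0 : qk y h k s = upd (qk y h k s) k (y k)).
      { apply functional_extensionality; intro j. unfold qk, upd.
        destruct (Nat.eqb_spec j k) as [->|Hne]; [|reflexivity].
        replace (Nat.ltb k k) with false by (symmetry; apply Nat.ltb_ge; lia). ring. }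
      assert (Hzin : forall c, Rmin (y k) (y k + s * h k) <= c <= Rmax (y k) (y k + s * h k) ->
                inRd d (upd (qk y h k s) k c) /\
                (forall j, (j < d)%nat -> Rabs (upd (qk y h k s) k c j - y j) <= Rabs s * Rabs (h j))).
      { intros c Hcc. split.
        - intros j Hj. unfold upd, qk. destruct (Nat.eqb_spec j k); [lia|].
          destruct (Nat.ltb_spec j k); [lia|]. rewrite (Hin y Hy j Hj). ring.
        - intros j Hj. unfold upd, qk. rewrite <- Rabs_mult. destruct (Nat.eqb_spec j k) as [->|Hne].
          + unfold Rmin, Rmax in Hcc. destruct (Rle_dec (y k) (y k + s * h k));
            [rewrite (Rabs_pos_eq (c - y k)) by lra; apply Rle_trans with (Rabs (s * h k)); [|lra]; rewrite Rabs_pos_eq; lra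
            |rewrite (Rabs_left1 (c - y k)) by lra; apply Rle_trans with (Rabs (s * h k)); [|lra]; rewrite Rabs_left; lra].
          + destruct (Nat.ltb_spec j k).
            * replace (y j + s * h j - y j) with (s * h j) by ring. lra.
            * replace (y j + 0 - y j) with 0 by ring. rewrite Rabs_R0. apply Rabs_pos. }
      destruct (MVT_between (fun c => f (upd (qk y h k s) k c)) (fun c => g k (upd (qk y h k s) k c))
                  (y k) (y k + s * h k)) as [c [Hc1 Hc2]].
      { intros c Hcc. destruct (Hzin c Hcc) as [Hz1 Hz2]. destruct (Hclose _ Hz1 Hz2) as [HOm _].
        specialize (Hp _ k HOm ltac:(lia)). unfold has_partial in Hp.
        assert (Ezk : upd (qk y h k s) k c k = c) by (unfold upd; rewrite Nat.eqb_refl; auto).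
        rewrite Ezk in Hp.
        eapply derivable_pt_lim_ext_fun; [|exact Hp]. intro s'. simpl. f_equal.
        apply functional_extensionality; intro j. unfold upd. destruct (Nat.eqb j k); reflexivity. }
      simpl in Hc2. rewrite <- Hq, <- Hq0 in Hc2.
      destruct (Hzin c Hc1) as [Hz1 Hz2]. destruct (Hclose _ Hz1 Hz2) as [_ [_ Hgc]].
      specialize (Hgc k ltac:(lia)).
      rewrite !sumd_S.
      replace (f (qk y h (S k) s) - f y - s * (sumd k (fun i => h i * g i y) + h k * g k y))
        with ((f (qk y h k s) - f y - s * sumd k (fun i => h i * g i y)) +
              (s * h k) * (g k (upd (qk y h k s) k c) - g k y)).
      2: { replace (y k + s * h k - y k) with (s * h k) in Hc2 by ring.
           assert (E : f (qk y h (S k) s) = f (qk y h k s) + g k (upd (qk y h k s) k c) * (s * h k)) by lra.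
           rewrite E. ring. }
      eapply Rle_trans; [apply Rabs_triang|]. rewrite Rabs_mult.
      assert (Rabs (s * h k) * Rabs (g k (upd (qk y h k s) k c) - g k y) <= Rabs s * Rabs (h k) * e').
      { rewrite Rabs_mult. apply Rmult_le_compat_l; [apply Rmult_le_pos; apply Rabs_pos| lra]. }
      lra. }
  specialize (Hind d (le_n d)).
  replace (qk y h d s) with (vline y h (0 + s)) in Hind.
  2: { apply functional_extensionality; intro j. unfold qk, vline. destruct (Nat.ltb_spec j d); [ring|].
       rewrite (Hh j) by lia. ring. }
  replace (vline y h 0) with y.
  2: { apply functional_extensionality; intro j. unfold vline. ring. }
  replace ((f (vline y h (0 + s)) - f y) / s - sumd d (fun i => h i * g i y))
    with ((f (vline y h (0 + s)) - f y - s * sumd d (fun i => h i * g i y)) / s) by (field; auto).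
  unfold Rdiv. rewrite Rabs_mult, Rabs_inv.
  apply Rle_lt_trans with (Rabs s * HH * e' * / Rabs s).
  { apply Rmult_le_compat_r; [apply Rlt_le, Rinv_0_lt_compat, Rabs_pos_lt; auto| exact Hind]. }
  replace (Rabs s * HH * e' * / Rabs s) with (HH * e') by (field; apply Rabs_no_R0; auto).
  unfold e'. replace (HH * (eps / (2 * (HH + 1)))) with (eps * (HH / (2 * (HH + 1)))) by (field; lra).
  assert (HH / (2 * (HH + 1)) < 1).
  { apply Rmult_lt_reg_r with (2 * (HH + 1)); [lra|]. field_simplify; lra. }
  nra.
Qed.


Definition ctn {X : Type} (near : R -> X -> Prop) (f : X -> R) (L : R) : Prop :=
  forall eps, 0 < eps -> exists del, 0 < del /\ forall x, near del x -> Rabs (f x - L) < eps.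

Definition mono_near {X : Type} (near : R -> X -> Prop) : Prop :=
  forall a b x, 0 < a -> a <= b -> near a x -> near b x.

Lemma ctn_const : forall X (near : R -> X -> Prop) c, ctn near (fun _ => c) c.
Proof. intros X near c eps He. exists 1. split; [lra|]. intros. rewrite Rminus_diag, Rabs_R0; auto. Qed.

Lemma ctn_plus : forall X (near : R -> X -> Prop) f g a b, mono_near near ->
  ctn near f a -> ctn near g b -> ctn near (fun x => f x + g x) (a + b).
Proof.
  intros X near f g a b Hm Hf Hg eps He.
  destruct (Hf (eps/2)) as [d1 [Hd1 H1]]; [lra|]. destruct (Hg (eps/2)) as [d2 [Hd2 H2]]; [lra|].
  exists (Rmin d1 d2). split; [apply Rmin_pos; auto|]. intros x Hx.
  assert (near d1 x) by (apply Hm with (Rmin d1 d2); auto; [apply Rmin_pos; auto| apply Rmin_l]).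
  assert (near d2 x) by (apply Hm with (Rmin d1 d2); auto; [apply Rmin_pos; auto| apply Rmin_r]).
  specialize (H1 x H). specialize (H2 x H0).
  replace (f x + g x - (a + b)) with ((f x - a) + (g x - b)) by ring.
  eapply Rle_lt_trans; [apply Rabs_triang|]. lra.
Qed.

Lemma ctn_opp : forall X (near : R -> X -> Prop) f a, ctn near f a -> ctn near (fun x => - f x) (- a).
Proof. intros X near f a Hf eps He. destruct (Hf eps He) as [d [Hd H]]. exists d; split; auto.
  intros x Hx. replace (- f x - - a) with (- (f x - a)) by ring. rewrite Rabs_Ropp; auto. Qed.

Lemma ctn_mult : forall X (near : R -> X -> Prop) f g a b, mono_near near ->
  ctn near f a -> ctn near g b -> ctn near (fun x => f x * g x) (a * b).
Proof.
  intros X near f g a b Hm Hf Hg eps He.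
  set (e1 := Rmin 1 (eps / (2 * (Rabs b + 1)))).
  set (e2 := eps / (2 * (Rabs a + 2))).
  assert (He1 : 0 < e1) by (unfold e1; apply Rmin_pos; [lra|]; apply Rdiv_lt_0_compat; [lra|]; pose proof (Rabs_pos b); lra).
  assert (He2 : 0 < e2) by (unfold e2; apply Rdiv_lt_0_compat; [lra|]; pose proof (Rabs_pos a); lra).
  destruct (Hf e1 He1) as [d1 [Hd1 H1]]. destruct (Hg e2 He2) as [d2 [Hd2 H2]].
  exists (Rmin d1 d2). split; [apply Rmin_pos; auto|]. intros x Hx.
  assert (near d1 x) by (apply Hm with (Rmin d1 d2); auto; [apply Rmin_pos; auto| apply Rmin_l]).
  assert (near d2 x) by (apply Hm with (Rmin d1 d2); auto; [apply Rmin_pos; auto| apply Rmin_r]).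
  specialize (H1 x H). specialize (H2 x H0).
  replace (f x * g x - a * b) with ((f x - a) * b + f x * (g x - b)) by ring.
  eapply Rle_lt_trans; [apply Rabs_triang|]. rewrite !Rabs_mult.
  assert (Hfx : Rabs (f x) <= Rabs a + 1).
  { replace (f x) with (a + (f x - a)) by ring. eapply Rle_trans; [apply Rabs_triang|].
    assert (e1 <= 1) by apply Rmin_l. lra. }
  assert (Rabs (f x - a) * Rabs b <= eps / 2).
  { assert (e1 <= eps / (2 * (Rabs b + 1))) by apply Rmin_r. pose proof (Rabs_pos b).
    apply Rle_trans with (eps / (2 * (Rabs b + 1)) * (Rabs b + 1)).
    - apply Rmult_le_compat; try apply Rabs_pos; lra.
    - right; field; lra. }
  assert (Rabs (f x) * Rabs (g x - b) < eps / 2).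
  { pose proof (Rabs_pos a). pose proof (Rabs_pos (f x)). pose proof (Rabs_pos (g x - b)).
    apply Rle_lt_trans with ((Rabs a + 1) * Rabs (g x - b)); [apply Rmult_le_compat_r; auto|].
    apply Rlt_le_trans with ((Rabs a + 2) * e2); [nra|]. unfold e2. right. field. lra. }
  lra.
Qed.

Lemma ctn_sumd : forall X (near : R -> X -> Prop) d (F : nat -> X -> R) (L : nat -> R), mono_near near ->
  (forall i, (i < d)%nat -> ctn near (F i) (L i)) -> ctn near (fun x => sumd d (fun i => F i x)) (sumd d L).
Proof.
  intros X near d F L Hm. induction d; intros H.
  - unfold sumd; simpl. apply ctn_const.
  - assert (E : (fun x => sumd (S d) (fun i => F i x)) = (fun x => sumd d (fun i => F i x) + F d x)).
    { apply functional_extensionality; intro; apply sumd_S. }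
    rewrite E, sumd_S. apply ctn_plus; [auto| apply IHd; intros; apply H; lia | apply H; lia].
Qed.

Lemma ctn_ext : forall X (near : R -> X -> Prop) f g L, (forall del x, near del x -> f x = g x) -> ctn near f L -> ctn near g L.
Proof. intros X near f g L E H eps He. destruct (H eps He) as [d [Hd H']]. exists d; split; auto.
  intros x Hx. rewrite <- (E d x Hx). auto. Qed.

Lemma derivable_sumd : forall d (F : nat -> R -> R) (D : nat -> R) x,
  (forall i, (i < d)%nat -> derivable_pt_lim (F i) x (D i)) ->
  derivable_pt_lim (fun s => sumd d (fun i => F i s)) x (sumd d D).
Proof.
  induction d; intros F D x H.
  - unfold sumd; simpl. apply derivable_pt_lim_const.
  - rewrite sumd_S. apply derivable_pt_lim_ext_fun with (fun s => sumd d (fun i => F i s) + F d s).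
    + intro; rewrite sumd_S; auto.
    + apply (derivable_pt_lim_plus (fun s => sumd d (fun i => F i s)) (F d)).
      apply IHd; intros; apply H; lia. apply H; lia.
Qed.

Lemma derivable_shift : forall f x l, derivable_pt_lim (fun s => f (x + s)) 0 l -> derivable_pt_lim f x l.
Proof.
  intros f x l H eps He. destruct (H eps He) as [del Hd]. exists del. intros h Hh Hhd.
  specialize (Hd h Hh Hhd). simpl in Hd. rewrite Rplus_0_l, Rplus_0_r in Hd. auto.
Qed.

Definition rcont (f : R -> R) : Prop :=
  forall eps, 0 < eps -> exists del, 0 < del /\ forall x, 0 < x < 0 + del -> Rabs (f x - f 0) < eps.

Lemma first_order : forall g G1 s0, 0 < s0 ->
  (forall s, 0 < s < s0 -> g 0 <= g s) -> rcont g ->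
  (forall s, 0 < s < s0 -> derivable_pt_lim g s (G1 s)) -> rcont G1 -> 0 <= G1 0.
Proof.
  intros g G1 s0 Hs0 Hmin Hg Hd HG. apply Rnot_lt_le; intro Hlt.
  destruct (HG (- G1 0 / 2)) as [del [Hdel H]]; [lra|].
  set (b := Rmin del s0 / 2).
  assert (Hb : 0 < b) by (unfold b; apply Rdiv_lt_0_compat; [apply Rmin_pos|]; lra).
  assert (Hb1 : b < del) by (unfold b; pose proof (Rmin_l del s0); lra).
  assert (Hb2 : b < s0) by (unfold b; pose proof (Rmin_r del s0); lra).
  assert (g b - g 0 <= (G1 0 / 2) * (b - 0)).
  { apply MVT_upper with G1; [lra| exact Hg| intros; apply Hd; lra|].
    intros x Hx. specialize (H x ltac:(lra)). apply Rabs_def2 in H. lra. }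
  specialize (Hmin b ltac:(lra)). nra.
Qed.

Lemma second_order : forall g G1 G2 s0, 0 < s0 ->
  (forall s, 0 < s < s0 -> g 0 <= g s) -> rcont g ->
  (forall s, 0 < s < s0 -> derivable_pt_lim g s (G1 s)) -> rcont G1 -> G1 0 = 0 ->
  (forall s, 0 < s < s0 -> derivable_pt_lim G1 s (G2 s)) -> rcont G2 -> 0 <= G2 0.
Proof.
  intros g G1 G2 s0 Hs0 Hmin Hg Hd HG1 H10 Hd2 HG2. apply Rnot_lt_le; intro Hlt.
  destruct (HG2 (- G2 0 / 2)) as [del [Hdel H]]; [lra|].
  set (b := Rmin del s0 / 2).
  assert (Hb : 0 < b) by (unfold b; apply Rdiv_lt_0_compat; [apply Rmin_pos|]; lra).
  assert (Hb1 : b < del) by (unfold b; pose proof (Rmin_l del s0); lra).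
  assert (Hb2 : b < s0) by (unfold b; pose proof (Rmin_r del s0); lra).
  assert (HG1neg : forall sg, 0 < sg <= b -> G1 sg <= (G2 0 / 2) * sg).
  { intros sg Hsg. assert (G1 sg - G1 0 <= (G2 0 / 2) * (sg - 0)); [|lra].
    apply MVT_upper with G2; [lra| exact HG1| intros; apply Hd2; lra|].
    intros x Hx. specialize (H x ltac:(lra)). apply Rabs_def2 in H. lra. }
  assert (g (b/2) - g 0 <= 0 * (b/2 - 0)).
  { apply MVT_upper with G1; [lra| exact Hg| intros; apply Hd; lra|].
    intros x Hx. specialize (HG1neg x ltac:(lra)). nra. }
  destruct (MVT_cor2 g G1 (b/2) b) as [c [Hc1 Hc2]]; [lra| intros; apply Hd; lra|].
  specialize (HG1neg c ltac:(lra)).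
  assert (G1 c < 0) by nra.
  specialize (Hmin b ltac:(lra)). nra.
Qed.


Definition contC d (Om : (nat -> R) -> Prop) (f : (nat -> R) -> R) : Prop :=
  forall x, closure d Om x -> forall eps, 0 < eps -> exists del, 0 < del /\
    forall y, closure d Om y -> normd d (vsub y x) < del -> Rabs (f y - f x) < eps.

Lemma normd_vsub_self : forall d x, normd d (vsub x x) = 0.
Proof. intros. unfold normd. rewrite sumd_zero; [apply sqrt_0|]. intros; unfold vsub; ring. Qed.

Lemma Om_closure : forall d Om x, OpenIn d Om -> Om x -> closure d Om x.
Proof. intros d Om x [Hin _] Hx. split; [auto|]. intros eps He. exists x. split; auto.
  rewrite normd_vsub_self; auto. Qed.

Lemma vline_0 : forall y h, vline y h 0 = y.
Proof. intros; apply functional_extensionality; intro; unfold vline; ring. Qed.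

Lemma vline_shift : forall y h s t, vline (vline y h s) h t = vline y h (s + t).
Proof. intros; apply functional_extensionality; intro; unfold vline; ring. Qed.

Lemma vline_close : forall d y h s, normd d (vsub (vline y h s) y) <= Rabs s * sumd d (fun j => Rabs (h j)).
Proof. intros. apply vsub_coord_bound. intros j Hj. unfold vline.
  replace (y j + s * h j - y j) with (s * h j) by ring. rewrite Rabs_mult; lra. Qed.

Lemma rcont_line : forall d Om f xs h s0, 0 < s0 -> contC d Om f -> OpenIn d Om -> closure d Om xs ->
  (forall s, 0 < s < s0 -> Om (vline xs h s)) -> rcont (fun s => f (vline xs h s)).
Proof.
  intros d Om f xs h s0 Hs0 Hf Hop Hxs Hadm eps He.
  destruct (Hf xs Hxs eps He) as [del [Hdel H]].
  set (HH := sumd d (fun j => Rabs (h j))).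
  assert (HH0 : 0 <= HH) by (apply sumd_nonneg; intros; apply Rabs_pos).
  exists (Rmin s0 (del / (HH + 1))). split.
  { apply Rmin_pos; auto. apply Rdiv_lt_0_compat; lra. }
  intros x Hx. rewrite vline_0. apply H.
  - apply Om_closure; auto. apply Hadm. pose proof (Rmin_l s0 (del / (HH + 1))). lra.
  - eapply Rle_lt_trans; [apply vline_close|]. fold HH. rewrite Rabs_pos_eq by lra.
    pose proof (Rmin_r s0 (del / (HH + 1))).
    assert (x < del / (HH + 1)) by lra.
    apply Rmult_lt_compat_r with (r := HH + 1) in H1; [|lra]. field_simplify in H1; [|lra]. nra.
Qed.

Lemma dir_min : forall d Om (w : (nat -> R) -> R) (wx : nat -> (nat -> R) -> R)
  (wxx : nat -> nat -> (nat -> R) -> R) xs h,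
  OpenIn d Om ->
  (forall z i, Om z -> (i < d)%nat -> has_partial w i z (wx i z)) ->
  (forall z i j, Om z -> (i < d)%nat -> (j < d)%nat -> has_partial (wx i) j z (wxx i j z)) ->
  contC d Om w -> (forall i, (i < d)%nat -> contC d Om (wx i)) ->
  (forall i j, (i < d)%nat -> (j < d)%nat -> contC d Om (wxx i j)) ->
  closure d Om xs -> (forall y, closure d Om y -> w xs <= w y) ->
  inRd d h -> (exists s0, 0 < s0 /\ forall s, 0 < s < s0 -> Om (vline xs h s)) ->
  0 <= sumd d (fun i => h i * wx i xs) /\
  (sumd d (fun i => h i * wx i xs) = 0 ->
   0 <= sumd d (fun i => h i * sumd d (fun j => h j * wxx i j xs))).
Proof.
  intros d Om w wx wxx xs h Hop Hpw Hpwx Cw Cwx Cwxx Hxs Hmin Hh [s0 [Hs0 Hadm]].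
  set (g := fun s => w (vline xs h s)).
  set (G1 := fun s => sumd d (fun i => h i * wx i (vline xs h s))).
  set (G2 := fun s => sumd d (fun i => h i * sumd d (fun j => h j * wxx i j (vline xs h s)))).
  assert (Hcont_int : forall (f : (nat -> R) -> R), contC d Om f -> forall y, Om y ->
     forall eps, 0 < eps -> exists del, 0 < del /\ forall z, Om z -> normd d (vsub z y) < del -> Rabs (f z - f y) < eps).
  { intros f Hf y Hy eps He. destruct (Hf y (Om_closure d Om y Hop Hy) eps He) as [del [Hdel H]].
    exists del; split; auto. intros z Hz Hn. apply H; auto. apply Om_closure; auto. }
  assert (Hmono : mono_near (fun del s => 0 < s < 0 + del)) by (intros a b x Ha Hab Hx; lra).
  assert (HG1c : rcont G1).
  { unfold rcont. intros eps He.
    assert (Hc : ctn (fun del s => 0 < s < 0 + del) G1 (G1 0)).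
    { unfold G1. apply ctn_sumd; auto. intros i Hi. apply ctn_mult; auto. apply ctn_const.
      apply (rcont_line d Om (wx i) xs h s0); auto. }
    exact (Hc eps He). }
  assert (HG2c : rcont G2).
  { unfold rcont. intros eps He.
    assert (Hc : ctn (fun del s => 0 < s < 0 + del) G2 (G2 0)).
    { unfold G2. apply ctn_sumd; auto. intros i Hi. apply ctn_mult; auto. apply ctn_const.
      apply ctn_sumd; auto. intros j Hj. apply ctn_mult; auto. apply ctn_const.
      apply (rcont_line d Om (wxx i j) xs h s0); auto. }
    exact (Hc eps He). }
  assert (Hgc : rcont g) by (apply (rcont_line d Om w xs h s0); auto).
  assert (Hgm : forall s, 0 < s < s0 -> g 0 <= g s).
  { intros s Hs. unfold g. rewrite vline_0. apply Hmin. apply Om_closure; auto. }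
  assert (Hdg : forall s, 0 < s < s0 -> derivable_pt_lim g s (G1 s)).
  { intros s Hs. apply derivable_shift. unfold g, G1.
    apply derivable_pt_lim_ext_fun with (fun t => w (vline (vline xs h s) h t)).
    { intro t. rewrite vline_shift. reflexivity. }
    apply chain_rule with Om; auto.
    all: try (intros i Hi; apply Hcont_int; auto). }
  assert (HdG1 : forall s, 0 < s < s0 -> derivable_pt_lim G1 s (G2 s)).
  { intros s Hs. apply derivable_shift. unfold G1, G2.
    apply derivable_pt_lim_ext_fun with (fun t => sumd d (fun i => h i * wx i (vline (vline xs h s) h t))).
    { intro t. rewrite vline_shift. reflexivity. }
    apply derivable_sumd. intros i Hi.
    apply derivable_pt_lim_scal with (f := fun t => wx i (vline (vline xs h s) h t)).
    apply chain_rule with Om; auto.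
    all: try (intros j Hj; apply Hcont_int; auto). }
  assert (E1 : G1 0 = sumd d (fun i => h i * wx i xs)) by (unfold G1; rewrite vline_0; reflexivity).
  assert (E2 : G2 0 = sumd d (fun i => h i * sumd d (fun j => h j * wxx i j xs))) by (unfold G2; rewrite vline_0; reflexivity).
  split.
  - rewrite <- E1. apply (first_order g G1 s0); auto.
  - intros H0. rewrite <- E2. apply (second_order g G1 G2 s0); auto. rewrite E1; auto.
Qed.


Definition l1d (d : nat) (x : nat -> R) : R := sumd d (fun j => Rabs (x j)).

Lemma l1d_le_normd : forall d x, l1d d x <= INR d * normd d x.
Proof. intros. unfold l1d. rewrite <- sumd_const. apply sumd_le. intros; apply coord_le_normd; auto. Qed.

Lemma l1d_nonneg : forall d x, 0 <= l1d d x.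
Proof. intros; apply sumd_nonneg; intros; apply Rabs_pos. Qed.

Lemma l1d_triang : forall d x y z, l1d d (vsub x z) <= l1d d (vsub x y) + l1d d (vsub y z).
Proof. intros. unfold l1d. rewrite <- sumd_plus. apply sumd_le. intros; unfold vsub.
  replace (x i - z i) with ((x i - y i) + (y i - z i)) by ring. apply Rabs_triang. Qed.

Definition Bl1 d (xs : nat -> R) rho : (nat -> R) -> Prop := fun y => inRd d y /\ l1d d (vsub y xs) < rho.

Lemma Bl1_open : forall d xs rho, OpenIn d (Bl1 d xs rho).
Proof.
  intros d xs rho. split; [intros z [Hz _]; auto|].
  intros z [Hz Hzr]. set (sg := rho - l1d d (vsub z xs)).
  exists (sg / (INR d + 1)). split.
  { apply Rdiv_lt_0_compat; [unfold sg; lra| pose proof (pos_INR d); lra]. }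
  intros w Hw Hn. split; auto.
  pose proof (l1d_triang d w z xs). pose proof (l1d_le_normd d (vsub w z)).
  pose proof (pos_INR d). pose proof (normd_nonneg d (vsub w z)).
  assert (INR d * normd d (vsub w z) < sg).
  { apply Rlt_le_trans with ((INR d + 1) * (sg / (INR d + 1))); [nra|]. right; field; lra. }
  unfold sg in *. lra.
Qed.

Lemma vsub_line : forall xs y, vline xs (vsub y xs) 1 = y.
Proof. intros; apply functional_extensionality; intro; unfold vline, vsub; ring. Qed.

Lemma chart_admissible : forall d (Om : (nat -> R) -> Prop) xs rho (F : (nat -> R) -> R) (G : nat -> (nat -> R) -> R) L,
  (forall x, Om x -> inRd d x) ->
  bdry d Om xs -> 0 < rho ->
  (forall y i, (inRd d y /\ normd d (vsub y xs) < rho) -> (i < d)%nat -> has_partial F i y (G i y)) ->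
  (forall y z i, (inRd d y /\ normd d (vsub y xs) < rho) -> (inRd d z /\ normd d (vsub z xs) < rho) -> (i < d)%nat ->
      Rabs (G i y - G i z) <= L * normd d (vsub y z)) ->
  (forall y, (inRd d y /\ normd d (vsub y xs) < rho) -> (Om y <-> F y < 0)) ->
  forall h, inRd d h -> sumd d (fun j => h j * G j xs) < 0 ->
  exists s0, 0 < s0 /\ forall s, 0 < s < s0 -> Om (vline xs h s).
Proof.
  intros d Om xs rho F G L HOmin [[Hxsin Hxsc] Hxsn] Hrho Hpar Hlip HOmF h Hh Hneg.
  set (B := Bl1 d xs (rho / (INR d + 1))).
  assert (HdI : 0 < INR d + 1) by (pose proof (pos_INR d); lra).
  assert (HBsub : forall y, B y -> inRd d y /\ normd d (vsub y xs) < rho).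
  { intros y [Hy Hyr]. split; auto. eapply Rle_lt_trans; [apply normd_le_sum|].
    apply Rlt_le_trans with (rho / (INR d + 1)); [exact Hyr|].
    assert (rho / (INR d + 1) * (INR d + 1) = rho) by (field; lra).
    assert (0 < rho / (INR d + 1)) by (apply Rdiv_lt_0_compat; lra). pose proof (pos_INR d). nra. }
  assert (HBxs : B xs).
  { split; auto. unfold l1d. rewrite sumd_zero. apply Rdiv_lt_0_compat; lra.
    intros; unfold vsub; rewrite Rminus_diag, Rabs_R0; auto. }
  assert (HGc : forall i y, (i < d)%nat -> B y -> forall eps, 0 < eps -> exists del, 0 < del /\
      forall z, B z -> normd d (vsub z y) < del -> Rabs (G i z - G i y) < eps).
  { intros i y Hi Hy eps He. exists (eps / (Rabs L + 1)). split.
    { apply Rdiv_lt_0_compat; [lra| pose proof (Rabs_pos L); lra]. }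
    intros z Hz Hn. eapply Rle_lt_trans; [apply Hlip; auto|].
    pose proof (Rabs_pos L). pose proof (normd_nonneg d (vsub z y)).
    apply Rle_lt_trans with (Rabs L * normd d (vsub z y)); [apply Rmult_le_compat_r; auto; apply Rle_abs|].
    apply Rle_lt_trans with (Rabs L * (eps / (Rabs L + 1))); [apply Rmult_le_compat_l; lra|].
    apply Rmult_lt_reg_r with (Rabs L + 1); [lra|]. field_simplify; lra. }
  assert (Hderiv : forall y k s, B (vline y k s) -> inRd d k ->
      derivable_pt_lim (fun t => F (vline y k t)) s (sumd d (fun j => k j * G j (vline y k s)))).
  { intros y k s Hys Hk. apply derivable_shift.
    apply derivable_pt_lim_ext_fun with (fun t => F (vline (vline y k s) k t)).
    { intro t. rewrite vline_shift. reflexivity. }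
    apply chain_rule with B; auto. apply Bl1_open.
    all: try (intros z i Hz Hi; apply Hpar; auto).
    all: try (intros i Hi; apply HGc; auto). }
  set (GS := sumd d (fun j => Rabs (G j xs))).
  assert (HGb : forall j z, (j < d)%nat -> B z -> Rabs (G j z) <= GS + Rabs L * rho).
  { intros j z Hj Hz. replace (G j z) with (G j xs + (G j z - G j xs)) by ring.
    eapply Rle_trans; [apply Rabs_triang|].
    assert (Rabs (G j xs) <= GS) by (apply (sumd_term_le d (fun j => Rabs (G j xs))); auto; intros; apply Rabs_pos).
    assert (Rabs (G j z - G j xs) <= Rabs L * rho).
    { eapply Rle_trans; [apply Hlip; auto|]. destruct (HBsub z Hz) as [_ Hn].
      pose proof (normd_nonneg d (vsub z xs)). pose proof (Rabs_pos L).
      apply Rle_trans with (Rabs L * normd d (vsub z xs)). apply Rmult_le_compat_r; auto; apply Rle_abs.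
      apply Rmult_le_compat_l; lra. }
    lra. }
  assert (HLr : 0 <= GS + Rabs L * rho).
  { pose proof (Rabs_pos L). assert (0 <= GS) by (apply sumd_nonneg; intros; apply Rabs_pos). nra. }
  assert (HFxs : F xs <= 0).
  { apply Rnot_lt_le; intro Hpos.
    set (M := (GS + Rabs L * rho + 1) * (INR d + 1)).
    assert (HM : 0 < M) by (unfold M; nra).
    set (e := Rmin (rho / (INR d + 1) / (INR d + 1)) (F xs / M)).
    assert (He : 0 < e) by (unfold e; apply Rmin_pos; apply Rdiv_lt_0_compat; auto; apply Rdiv_lt_0_compat; auto).
    destruct (Hxsc e He) as [y [HOy Hny]].
    assert (Hy1 : l1d d (vsub y xs) < rho / (INR d + 1)).
    { pose proof (l1d_le_normd d (vsub y xs)).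
      assert (normd d (vsub y xs) = normd d (vsub xs y)).
      { unfold normd. f_equal. apply sumd_ext. intros; unfold vsub; ring. }
      assert (e <= rho / (INR d + 1) / (INR d + 1)) by apply Rmin_l.
      pose proof (pos_INR d). pose proof (normd_nonneg d (vsub y xs)).
      apply Rle_lt_trans with (INR d * normd d (vsub y xs)); auto.
      apply Rle_lt_trans with ((INR d + 1) * normd d (vsub y xs)); [nra|].
      apply Rlt_le_trans with ((INR d + 1) * (rho / (INR d + 1) / (INR d + 1))); [nra|]. right; field; lra. }
    assert (HBy : B y) by (split; auto).
    assert (HFy : F y < 0) by (apply HOmF; auto).
    assert (Hseg : forall s, 0 <= s <= 1 -> B (vline xs (vsub y xs) s)).
    { intros s Hs. split.
      - intros j Hj. unfold vline, vsub. rewrite (Hxsin j Hj), (HOmin y HOy j Hj). ring.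
      - unfold l1d in *. replace (sumd d (fun j => Rabs (vsub (vline xs (vsub y xs) s) xs j)))
          with (s * sumd d (fun j => Rabs (vsub y xs j))).
        + pose proof (sumd_nonneg d (fun j => Rabs (vsub y xs j)) (fun j _ => Rabs_pos _)). nra.
        + rewrite <- sumd_scal. apply sumd_ext. intros; unfold vline, vsub.
          replace (xs i + s * (y i - xs i) - xs i) with (s * (y i - xs i)) by ring.
          rewrite Rabs_mult, (Rabs_pos_eq s); lra. }
    assert (Hyin : inRd d (vsub y xs)).
    { intros j Hj. unfold vsub. rewrite (Hxsin j Hj), (HOmin y HOy j Hj). ring. }
    destruct (MVT_between (fun s => F (vline xs (vsub y xs) s))
                (fun s => sumd d (fun j => vsub y xs j * G j (vline xs (vsub y xs) s))) 0 1) as [c [Hc1 Hc2]].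
    { intros c Hc. rewrite Rmin_left, Rmax_right in Hc by lra. apply Hderiv; auto. }
    rewrite Rmin_left, Rmax_right in Hc1 by lra.
    simpl in Hc2. rewrite vsub_line, vline_0 in Hc2.
    assert (Habs : Rabs (sumd d (fun j => vsub y xs j * G j (vline xs (vsub y xs) c))) <=
                   l1d d (vsub y xs) * (GS + Rabs L * rho)).
    { eapply Rle_trans; [apply sumd_abs|]. unfold l1d. rewrite Rmult_comm, <- sumd_scal.
      apply sumd_le. intros j Hj. rewrite Rabs_mult. rewrite Rmult_comm.
      apply Rmult_le_compat_r; [apply Rabs_pos|]. apply HGb; auto. }
    assert (l1d d (vsub y xs) * (GS + Rabs L * rho) < F xs).
    { pose proof (l1d_le_normd d (vsub y xs)).
      assert (normd d (vsub y xs) = normd d (vsub xs y)).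
      { unfold normd. f_equal. apply sumd_ext. intros; unfold vsub; ring. }
      assert (e <= F xs / M) by apply Rmin_r.
      pose proof (pos_INR d). pose proof (normd_nonneg d (vsub y xs)). pose proof (l1d_nonneg d (vsub y xs)).
      assert (Hl : l1d d (vsub y xs) <= (INR d + 1) * (F xs / M)) by nra.
      apply Rle_lt_trans with ((INR d + 1) * (F xs / M) * (GS + Rabs L * rho)); [nra|].
      unfold M. replace ((INR d + 1) * (F xs / ((GS + Rabs L * rho + 1) * (INR d + 1))) * (GS + Rabs L * rho))
        with (F xs * ((GS + Rabs L * rho) / (GS + Rabs L * rho + 1))) by (field; lra).
      assert ((GS + Rabs L * rho) / (GS + Rabs L * rho + 1) < 1).
      { apply Rmult_lt_reg_r with (GS + Rabs L * rho + 1); [lra|]. field_simplify; lra. }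
      nra. }
    pose proof (Rle_abs (sumd d (fun j => vsub y xs j * G j (vline xs (vsub y xs) c)))) as Hra. pose proof (Rabs_Ropp (sumd d (fun j => vsub y xs j * G j (vline xs (vsub y xs) c)))) as Hrb. pose proof (Rle_abs (- sumd d (fun j => vsub y xs j * G j (vline xs (vsub y xs) c)))) as Hrc. replace (1 - 0) with 1 in Hc2 by ring. rewrite Rmult_1_r in Hc2. lra. }
  set (q := sumd d (fun j => h j * G j xs)).
  set (HH := sumd d (fun j => Rabs (h j))).
  assert (HH0 : 0 <= HH) by (apply sumd_nonneg; intros; apply Rabs_pos).
  destruct (min_delta d (fun j del => forall z, B z -> normd d (vsub z xs) < del -> Rabs (G j z - G j xs) < - q / (2 * (HH + 1))))
    as [dg [Hdg Hdgp]].
  { intros j a b Ha Hab Hb z Hz Hn. apply Hb; auto; lra. }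
  { intros j Hj. apply HGc; auto. apply Rdiv_lt_0_compat; [unfold q in *; lra| lra]. }
  set (s0 := Rmin dg (rho / (INR d + 1))/ (HH + 1)).
  assert (Hs0 : 0 < s0) by (unfold s0; apply Rdiv_lt_0_compat; [apply Rmin_pos; [auto| apply Rdiv_lt_0_compat; auto]| lra]).
  exists s0. split; auto. intros s Hs.
  assert (Hsm : s * HH < Rmin dg (rho / (INR d + 1))).
  { assert (s < s0) by lra. unfold s0 in H.
    apply Rmult_lt_compat_r with (r := HH + 1) in H; [|lra]. field_simplify in H; [|lra]. nra. }
  assert (HBl : forall t, 0 <= t <= s -> B (vline xs h t) /\ normd d (vsub (vline xs h t) xs) < dg).
  { intros t Ht. assert (t * HH <= s * HH) by nra.
    pose proof (Rmin_l dg (rho / (INR d + 1))). pose proof (Rmin_r dg (rho / (INR d + 1))).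
    split; [split|].
    - intros j Hj. unfold vline. rewrite (Hxsin j Hj), (Hh j Hj). ring.
    - unfold l1d. replace (sumd d (fun j => Rabs (vsub (vline xs h t) xs j))) with (t * HH). lra.
      unfold HH. rewrite <- sumd_scal. apply sumd_ext. intros; unfold vline, vsub.
      replace (xs i + t * h i - xs i) with (t * h i) by ring. rewrite Rabs_mult, (Rabs_pos_eq t); lra.
    - eapply Rle_lt_trans; [apply vline_close|]. fold HH. rewrite Rabs_pos_eq; lra. }
  destruct (MVT_between (fun t => F (vline xs h t)) (fun t => sumd d (fun j => h j * G j (vline xs h t))) 0 s)
    as [c [Hc1 Hc2]].
  { intros c Hc. rewrite Rmin_left, Rmax_right in Hc by lra. apply Hderiv; auto. apply HBl; lra. }
  rewrite Rmin_left, Rmax_right in Hc1 by lra. simpl in Hc2. rewrite vline_0 in Hc2.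
  destruct (HBl c Hc1) as [HBc Hnc].
  assert (Hdq : sumd d (fun j => h j * G j (vline xs h c)) - q <= HH * (- q / (2 * (HH + 1)))).
  { unfold q. rewrite <- sumd_minus. eapply Rle_trans; [apply Rle_abs|]. eapply Rle_trans; [apply sumd_abs|].
    unfold HH. rewrite Rmult_comm, <- sumd_scal. apply sumd_le. intros j Hj.
    replace (h j * G j (vline xs h c) - h j * G j xs) with (h j * (G j (vline xs h c) - G j xs)) by ring.
    rewrite Rabs_mult, Rmult_comm. apply Rmult_le_compat_r; [apply Rabs_pos|]. left. apply Hdgp; auto. }
  assert (HH * (- q / (2 * (HH + 1))) <= - q / 2).
  { replace (HH * (- q / (2 * (HH + 1)))) with ((-q/2) * (HH / (HH + 1))) by (field; lra).
    assert (HH / (HH + 1) <= 1).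
    { apply Rmult_le_reg_r with (HH + 1); [lra|]. field_simplify; lra. }
    assert (0 <= - q / 2) by (unfold q in *; lra). 
    assert (0 <= HH / (HH + 1)) by (unfold Rdiv; apply Rmult_le_pos; [lra| apply Rlt_le, Rinv_0_lt_compat; lra]). nra. }
  assert (Hdn : sumd d (fun j => h j * G j (vline xs h c)) < 0) by (unfold q in *; lra).
  assert (HF : F (vline xs h s) < 0).
  { assert (sumd d (fun j => h j * G j (vline xs h c)) * (s - 0) < 0) by (apply Rmult_neg_pos; lra). lra. }
  apply HOmF; auto. apply HBsub. apply HBl; lra.
Qed.


Lemma bd_open : forall d Om, bounded_domain d Om -> OpenIn d Om.
Proof. intros d Om [H1 [_ [H3 _]]]. split; auto. Qed.

Definition Qf d (M : nat -> nat -> R) (h : nat -> R) : R :=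
  sumd d (fun a => h a * sumd d (fun b => h b * M a b)).

Lemma ebas_inRd : forall d i, (i < d)%nat -> inRd d (ebas i).
Proof. intros d i Hi j Hj. unfold ebas. destruct (Nat.eqb_spec j i); [lia|auto]. Qed.

Lemma sumd_sbasis : forall d i s f, (i < d)%nat -> sumd d (fun j => (s * ebas i j) * f j) = s * f i.
Proof. intros. rewrite <- (sumd_basis d i (fun j => s * f j)); auto. apply sumd_ext; intros; ring. Qed.

Lemma Qf_basis : forall d M i s, (i < d)%nat -> Qf d M (fun j => s * ebas i j) = s * s * M i i.
Proof. intros. unfold Qf. rewrite sumd_sbasis; auto. rewrite sumd_sbasis; auto. ring. Qed.

Lemma interior_adm : forall d Om xs h, OpenIn d Om -> Om xs -> inRd d h ->
  exists s0, 0 < s0 /\ forall s, 0 < s < s0 -> Om (vline xs h s).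
Proof.
  intros d Om xs h [Hin Hop] Hxs Hh. destruct (Hop xs Hxs) as [rho [Hrho Hb]].
  set (HH := sumd d (fun j => Rabs (h j))).
  assert (HH0 : 0 <= HH) by (apply sumd_nonneg; intros; apply Rabs_pos).
  exists (rho / (HH + 1)). split; [apply Rdiv_lt_0_compat; lra|]. intros s Hs.
  apply Hb.
  - intros j Hj. unfold vline. rewrite (Hin xs Hxs j Hj), (Hh j Hj). ring.
  - eapply Rle_lt_trans; [apply vline_close|]. fold HH. rewrite Rabs_pos_eq by lra.
    assert (s * (HH + 1) < rho).
    { destruct Hs as [_ Hs]. apply Rmult_lt_compat_r with (r := HH + 1) in Hs; [|lra].
      field_simplify in Hs; lra. }
    nra.
Qed.

Lemma space_min : forall d Om (n : (nat -> R) -> nat -> R) (w : (nat -> R) -> R) (wx : nat -> (nat -> R) -> R)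
  (wxx : nat -> nat -> (nat -> R) -> R) xs,
  bounded_domain d Om -> C11_boundary_normal d Om n ->
  (forall z i, Om z -> (i < d)%nat -> has_partial w i z (wx i z)) ->
  (forall z i j, Om z -> (i < d)%nat -> (j < d)%nat -> has_partial (wx i) j z (wxx i j z)) ->
  contC d Om w -> (forall i, (i < d)%nat -> contC d Om (wx i)) ->
  (forall i j, (i < d)%nat -> (j < d)%nat -> contC d Om (wxx i j)) ->
  closure d Om xs -> (forall y, closure d Om y -> w xs <= w y) ->
  (bdry d Om xs -> sumd d (fun i => wx i xs * n xs i) = 0) ->
  (forall i, (i < d)%nat -> wx i xs = 0) /\ 0 <= sumd d (fun i => wxx i i xs).
Proof.
  intros d Om n w wx wxx xs HOm Hn Hpw Hpwx Cw Cwx Cwxx Hxs Hmin Hneu.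
  pose proof (bd_open d Om HOm) as Hop.
  assert (DM := fun h => dir_min d Om w wx wxx xs h Hop Hpw Hpwx Cw Cwx Cwxx Hxs Hmin).
  assert (Hlap : (forall i, (i < d)%nat -> 0 <= wxx i i xs) -> 0 <= sumd d (fun i => wxx i i xs)).
  { intros H. apply sumd_nonneg; auto. }
  destruct (classic (Om xs)) as [HO|HnO].
  -
    assert (Hgrad : forall i, (i < d)%nat -> wx i xs = 0).
    { intros i Hi.
      destruct (DM (fun j => 1 * ebas i j)) as [Ha _].
      { intros j Hj. rewrite (ebas_inRd d i Hi j Hj). ring. }
      { apply (interior_adm d); auto. intros j Hj. rewrite (ebas_inRd d i Hi j Hj). ring. }
      destruct (DM (fun j => -1 * ebas i j)) as [Hb _].
      { intros j Hj. rewrite (ebas_inRd d i Hi j Hj). ring. }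
      { apply (interior_adm d); auto. intros j Hj. rewrite (ebas_inRd d i Hi j Hj). ring. }
      rewrite sumd_sbasis in Ha, Hb by auto. lra. }
    split; auto. apply Hlap. intros i Hi.
    destruct (DM (fun j => 1 * ebas i j)) as [_ Hb].
    { intros j Hj. rewrite (ebas_inRd d i Hi j Hj). ring. }
    { apply (interior_adm d); auto. intros j Hj. rewrite (ebas_inRd d i Hi j Hj). ring. }
    assert (H0 : sumd d (fun i0 => 1 * ebas i i0 * wx i0 xs) = 0) by (rewrite sumd_sbasis; auto; rewrite Hgrad; auto; ring).
    specialize (Hb H0). fold (Qf d (fun a b => wxx a b xs) (fun j => 1 * ebas i j)) in Hb.
    rewrite Qf_basis in Hb; auto. lra.
  -
    assert (Hbd : bdry d Om xs) by (split; auto).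
    destruct (Hn xs Hbd) as [rho [F [G [L [Hrho Hch]]]]]. cbv zeta in Hch.
    destruct Hch as [Hpar [Hlip [Hpos [HOF Hnorm]]]].
    assert (HBxs : inRd d xs /\ normd d (vsub xs xs) < rho) by (split; [apply Hxs| rewrite normd_vsub_self; auto]).
    set (Gn := normd d (fun j => G j xs)).
    assert (HGn : 0 < Gn) by (apply Hpos; auto).
    set (S2 := sumd d (fun j => G j xs * G j xs)).
    assert (HS2 : 0 < S2).
    { destruct (Rle_lt_dec S2 0) as [Hle|]; auto. exfalso. unfold Gn, normd in HGn. fold S2 in HGn.
      assert (S2 = 0) by (pose proof (sumd_nonneg d (fun j => G j xs * G j xs) (fun j _ => ltac:(nra))); fold S2 in H; lra).
      rewrite H, sqrt_0 in HGn. lra. }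
    assert (HGw : sumd d (fun j => G j xs * wx j xs) = 0).
    { specialize (Hneu Hbd).
      assert (E : sumd d (fun i => wx i xs * n xs i) = / Gn * sumd d (fun j => G j xs * wx j xs)).
      { rewrite <- sumd_scal. apply sumd_ext. intros i Hi. rewrite (Hnorm xs HBxs Hbd i Hi). fold Gn.
        unfold Rdiv. ring. }
      rewrite E in Hneu. apply Rmult_integral in Hneu. destruct Hneu as [H|H]; auto.
      exfalso. apply Rinv_neq_0_compat in H; auto; lra. }
    set (Gv := fun j => if Nat.ltb j d then G j xs else 0).
    assert (HGv : inRd d Gv) by (intros j Hj; unfold Gv; destruct (Nat.ltb_spec j d); [lia|auto]).
    assert (Hadm := chart_admissible d Om xs rho F G L (proj1 Hop) Hbd Hrho Hpar Hlip HOF).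
    assert (Hdir : forall i s c, (i < d)%nat -> inRd d (fun j => s * ebas i j + - (c * Gv j)) /\
               sumd d (fun j => (s * ebas i j + - (c * Gv j)) * G j xs) = s * G i xs - c * S2 /\
               forall f, sumd d (fun j => (s * ebas i j + - (c * Gv j)) * f j) =
                         s * f i - c * sumd d (fun j => G j xs * f j)).
    { intros i s c Hi. split; [|split].
      - intros j Hj. rewrite (ebas_inRd d i Hi j Hj), (HGv j Hj). ring.
      - replace (sumd d (fun j => (s * ebas i j + - (c * Gv j)) * G j xs))
          with (sumd d (fun j => (s * ebas i j) * G j xs) - c * S2).
        rewrite sumd_sbasis; auto. unfold S2. rewrite <- sumd_scal, <- sumd_minus. apply sumd_ext. intros j Hj.
        unfold Gv. destruct (Nat.ltb_spec j d); [ring|lia].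
      - intros f. rewrite <- (sumd_sbasis d i s f Hi), <- sumd_scal, <- sumd_minus. apply sumd_ext. intros j Hj.
        unfold Gv. destruct (Nat.ltb_spec j d); [ring|lia]. }
    assert (Hgrad : forall i, (i < d)%nat -> wx i xs = 0).
    { intros i Hi. set (c := (Rabs (G i xs) + 1) / S2).
      assert (HcS : c * S2 = Rabs (G i xs) + 1) by (unfold c; field; lra).
      assert (Hside : forall s, (s = 1 \/ s = -1) -> 0 <= s * wx i xs).
      { intros s Hs. destruct (Hdir i s c Hi) as [Hin [Hdot Hf]].
        destruct (DM _ Hin) as [Ha _].
        { apply Hadm; auto. cbv beta.
          rewrite Hdot, HcS. destruct Hs as [->| ->]; pose proof (Rle_abs (G i xs)); pose proof (Rabs_Ropp (G i xs));
          pose proof (Rle_abs (- G i xs)); lra. }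
        rewrite Hf, HGw in Ha. lra. }
      pose proof (Hside 1 (or_introl eq_refl)). pose proof (Hside (-1) (or_intror eq_refl)). lra. }
    split; auto. apply Hlap. intros i Hi.
    set (s := if Rle_dec (G i xs) 0 then 1 else -1).
    assert (Hs2 : s * s = 1) by (unfold s; destruct (Rle_dec (G i xs) 0); ring).
    assert (HsG : s * G i xs <= 0) by (unfold s; destruct (Rle_dec (G i xs) 0); lra).
    assert (HQpos : forall c, 0 < c -> 0 <= Qf d (fun a b => wxx a b xs) (fun j => s * ebas i j + - (c * Gv j))).
    { intros c Hc. destruct (Hdir i s c Hi) as [Hin [Hdot Hf]].
      destruct (DM _ Hin) as [_ Hb].
      { apply Hadm; auto. cbv beta.
        rewrite Hdot. nra. }
      apply Hb. rewrite Hf, HGw, Hgrad; auto. ring. }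
    assert (Hlim : ctn (fun del x => 0 < x < del) (fun c => Qf d (fun a b => wxx a b xs) (fun j => s * ebas i j + - (c * Gv j)))
                     (Qf d (fun a b => wxx a b xs) (fun j => s * ebas i j + - (0 * Gv j)))).
    { assert (Hm : mono_near (fun del (x : R) => 0 < x < del)) by (intros a b x Ha Hab Hx; lra).
      assert (Hid : ctn (fun del (x : R) => 0 < x < del) (fun x => x) 0).
      { intros eps He. exists eps. split; auto. intros x Hx. rewrite Rminus_0_r, Rabs_pos_eq; lra. }
      assert (Hh : forall j, ctn (fun del (x : R) => 0 < x < del) (fun c => s * ebas i j + - (c * Gv j)) (s * ebas i j + - (0 * Gv j))).
      { intros j. apply ctn_plus; auto. apply ctn_const. apply ctn_opp. apply ctn_mult; auto. apply ctn_const. }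
      unfold Qf. apply ctn_sumd; auto. intros a Ha. apply ctn_mult; auto.
      apply ctn_sumd; auto. intros b Hb. apply ctn_mult; auto. apply ctn_const. }
    assert (E0 : (fun j => s * ebas i j + - (0 * Gv j)) = (fun j => s * ebas i j)).
    { apply functional_extensionality; intro; ring. }
    rewrite E0, Qf_basis, Hs2 in Hlim by auto.
    apply Rnot_lt_le; intro Hneg.
    destruct (Hlim (- wxx i i xs / 2)) as [del [Hdel Hd]]; [lra|].
    specialize (Hd (del / 2) ltac:(lra)). specialize (HQpos (del/2) ltac:(lra)).
    apply Rabs_def2 in Hd. lra.
Qed.


Definition sincr (phi : nat -> nat) : Prop := forall n, (phi n < phi (S n))%nat.

Lemma sincr_ge : forall phi, sincr phi -> forall n, (n <= phi n)%nat.
Proof. intros phi H n. induction n; [lia|]. specialize (H n). lia. Qed.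

Lemma sincr_mono : forall phi, sincr phi -> forall n m, (n <= m)%nat -> (phi n <= phi m)%nat.
Proof. intros phi H n m Hnm. induction Hnm; [lia|]. specialize (H m). lia. Qed.

Lemma sincr_comp : forall phi psi, sincr phi -> sincr psi -> sincr (fun n => phi (psi n)).
Proof. intros phi psi H1 H2 n. assert (psi n < psi (S n))%nat by apply H2.
  assert (phi (S (psi n)) <= phi (psi (S n)))%nat by (apply sincr_mono; auto).
  specialize (H1 (psi n)). lia. Qed.

Lemma Un_cv_sub : forall u l psi, sincr psi -> Un_cv u l -> Un_cv (fun n => u (psi n)) l.
Proof. intros u l psi Hp Hu eps He. destruct (Hu eps He) as [N HN]. exists N. intros n Hn.
  apply HN. pose proof (sincr_ge psi Hp n). lia. Qed.

Lemma subseq_1d : forall (u : nat -> R) M, (forall n, Rabs (u n) <= M) ->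
  exists phi, sincr phi /\ exists l, Un_cv (fun n => u (phi n)) l.
Proof.
  intros u M HM.
  destruct (Bolzano_Weierstrass u (fun c => -M <= c <= M) (compact_P3 (-M) M)) as [l Hl].
  { intros n. specialize (HM n). pose proof (Rle_abs (u n)). pose proof (Rabs_Ropp (u n)). pose proof (Rle_abs (- u n)). lra. }
  assert (Hex : forall N k : nat, exists p, (N <= p)%nat /\ Rabs (u p - l) < / INR (S k)).
  { intros N k. assert (Hpos : 0 < / INR (S k)) by (apply Rinv_0_lt_compat, lt_0_INR; lia).
    destruct (Hl (fun y => Rabs (y - l) < / INR (S k)) N) as [p [Hp HV]].
    { exists (mkposreal _ Hpos). intros y Hy. unfold disc in Hy. simpl in Hy. auto. }
    exists p; auto. }
  set (pk := fun N k => proj1_sig (constructive_indefinite_description _ (Hex N k))).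
  assert (Hpk : forall N k, (N <= pk N k)%nat /\ Rabs (u (pk N k) - l) < / INR (S k)).
  { intros N k. unfold pk. destruct (constructive_indefinite_description _ (Hex N k)); auto. }
  set (phi := fix phi n := match n with O => pk O O | S m => pk (S (phi m)) (S m) end).
  exists phi. split.
  - intros n. simpl. destruct (Hpk (S (phi n)) (S n)). lia.
  - exists l. intros eps He. destruct (archimed_cor1 eps He) as [N [HN HN0]].
    exists N. intros n Hn. unfold R_dist.
    assert (Rabs (u (phi n) - l) < / INR (S n)).
    { destruct n; simpl; apply Hpk. }
    eapply Rlt_trans; [apply H|]. eapply Rle_lt_trans; [|apply HN].
    apply Rinv_le_contravar; [apply lt_0_INR; lia| apply le_INR; lia].
Qed.

Lemma subseq_kd : forall k (z : nat -> nat -> R) M, (forall n i, (i < k)%nat -> Rabs (z n i) <= M) ->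
  exists phi, sincr phi /\ forall i, (i < k)%nat -> exists l, Un_cv (fun n => z (phi n) i) l.
Proof.
  induction k; intros z M HM.
  - exists (fun n => n). split; [intro; lia| intros; lia].
  - destruct (IHk z M) as [phi1 [Hp1 Hc1]]; [intros; apply HM; lia|].
    destruct (subseq_1d (fun n => z (phi1 n) k) M) as [phi2 [Hp2 [l Hl]]]; [intros; apply HM; lia|].
    exists (fun n => phi1 (phi2 n)). split; [apply sincr_comp; auto|].
    intros i Hi. destruct (Nat.eq_dec i k) as [->|Hne].
    + exists l. auto.
    + destruct (Hc1 i ltac:(lia)) as [l' Hl']. exists l'.
      apply (Un_cv_sub (fun n => z (phi1 n) i)); auto.
Qed.


Lemma normd_sym : forall d x y, normd d (vsub x y) = normd d (vsub y x).
Proof. intros. unfold normd. f_equal. apply sumd_ext. intros; unfold vsub; ring. Qed.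

Lemma max_N : forall d (P : nat -> nat -> Prop),
  (forall i, (i < d)%nat -> exists N, forall n, (N <= n)%nat -> P i n) ->
  exists N, forall i, (i < d)%nat -> forall n, (N <= n)%nat -> P i n.
Proof.
  induction d; intros P H. - exists O; intros; lia.
  - destruct (IHd P) as [N1 H1]; [intros; apply H; lia|]. destruct (H d) as [N2 H2]; [lia|].
    exists (max N1 N2). intros i Hi n Hn. destruct (Nat.eq_dec i d) as [->|].
    + apply H2; lia. + apply H1; lia.
Qed.

Lemma closure_coord_bound : forall d Om M x, (forall y, Om y -> normd d y <= M) -> closure d Om x ->
  forall i, (i < d)%nat -> Rabs (x i) <= M + 1.
Proof.
  intros d Om M x HM [Hin Hc] i Hi. destruct (Hc 1 Rlt_0_1) as [y [Hy Hn]].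
  replace (x i) with ((x i - y i) + y i) by ring. eapply Rle_trans; [apply Rabs_triang|].
  pose proof (coord_le_normd d (vsub x y) i Hi). pose proof (coord_le_normd d y i Hi).
  specialize (HM y Hy). change (vsub x y i) with (x i - y i) in H. lra.
Qed.

Lemma cQ_extract : forall d T Om (tn : nat -> R) (xn : nat -> nat -> R),
  bounded_domain d Om -> (forall n, cQ d T Om (tn n) (xn n)) ->
  exists phi t X, sincr phi /\ cQ d T Om t X /\
    forall eps, 0 < eps -> exists N, forall n, (N <= n)%nat -> Rabs (tn (phi n) - t) + normd d (vsub (xn (phi n)) X) < eps.
Proof.
  intros d T Om tn xn HOm Hc.
  destruct HOm as [HOin [[y0 Hy0] [_ [_ [M HM]]]]].
  assert (HM0 : 0 <= M) by (pose proof (HM y0 Hy0); pose proof (normd_nonneg d y0); lra).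
  set (z := fun n i => match i with O => tn n | S j => xn n j end).
  destruct (subseq_kd (S d) z (T + M + 1)) as [phi [Hphi Hcv]].
  { intros n i Hi. destruct (Hc n) as [Ht Hx]. destruct i; simpl.
    - rewrite Rabs_pos_eq; lra.
    - pose proof (closure_coord_bound d Om M (xn n) HM Hx i ltac:(lia)). lra. }
  assert (Hl : forall i, exists l, (i < S d)%nat -> Un_cv (fun n => z (phi n) i) l).
  { intros i. destruct (Nat.lt_ge_cases i (S d)) as [Hi|Hi].
    - destruct (Hcv i Hi) as [l Hl]. exists l; auto.
    - exists 0; intros; lia. }
  set (lim := fun i => proj1_sig (constructive_indefinite_description _ (Hl i))).
  assert (Hlim : forall i, (i < S d)%nat -> Un_cv (fun n => z (phi n) i) (lim i)).
  { intros i Hi. unfold lim. destruct (constructive_indefinite_description _ (Hl i)); simpl; auto. }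
  set (t := lim O). set (X := fun j => if Nat.ltb j d then lim (S j) else 0).
  assert (Hconv : forall eps, 0 < eps -> exists N, forall n, (N <= n)%nat ->
            Rabs (tn (phi n) - t) + normd d (vsub (xn (phi n)) X) < eps).
  { intros eps He.
    destruct (max_N (S d) (fun i n => Rabs (z (phi n) i - lim i) < eps / 2 / INR (S d))) as [N HN].
    { intros i Hi. destruct (Hlim i Hi (eps / 2 / INR (S d))) as [N HN].
      { apply Rdiv_lt_0_compat; [lra| apply lt_0_INR; lia]. }
      exists N. intros n Hn. apply HN; auto. }
    exists N. intros n Hn.
    assert (H1 : Rabs (tn (phi n) - t) < eps / 2 / INR (S d)) by (apply (HN O); lia).
    assert (H2 : normd d (vsub (xn (phi n)) X) < eps / 2).
    { apply normd_small; [lra|]. intros i Hi. unfold vsub, X.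
      destruct (Nat.ltb_spec i d); [|lia]. apply (HN (S i)); lia. }
    assert (eps / 2 / INR (S d) <= eps / 2).
    { unfold Rdiv. rewrite <- (Rmult_1_r (eps * / 2)) at 2. apply Rmult_le_compat_l; [lra|].
      rewrite <- Rinv_1. apply Rinv_le_contravar; [lra|]. rewrite S_INR. pose proof (pos_INR d). lra. }
    lra. }
  exists phi, t, X. split; auto. split; auto.
  split.
  -
    assert (Ht : forall eps, 0 < eps -> 0 - eps < t /\ t < T + eps).
    { intros eps He. destruct (Hconv eps He) as [N HN]. specialize (HN N (le_n _)).
      pose proof (normd_nonneg d (vsub (xn (phi N)) X)). destruct (Hc (phi N)) as [Htt _].
      assert (Rabs (tn (phi N) - t) < eps) by lra. apply Rabs_def2 in H0. lra. }
    split; apply Rnot_lt_le; intro Hlt.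
    + destruct (Ht (- t / 2)); lra.
    + destruct (Ht ((t - T) / 2)); lra.
  - split.
    + intros j Hj. unfold X. destruct (Nat.ltb_spec j d); [lia|auto].
    + intros eps He.
      set (e := eps / 2 / (INR d + 1)).
      assert (He' : 0 < e) by (unfold e; apply Rdiv_lt_0_compat; [lra| pose proof (pos_INR d); lra]).
      destruct (Hconv e He') as [N HN]. specialize (HN N (le_n _)).
      destruct (Hc (phi N)) as [_ [_ Hcl]]. destruct (Hcl e He') as [y [Hy Hny]].
      exists y. split; auto.
      eapply Rle_lt_trans; [apply normd_le_sum|].
      apply Rle_lt_trans with (l1d d (vsub X (xn (phi N))) + l1d d (vsub (xn (phi N)) y)).
      { unfold l1d. rewrite <- sumd_plus. apply sumd_le. intros i Hi. unfold vsub.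
        replace (X i - y i) with ((X i - xn (phi N) i) + (xn (phi N) i - y i)) by ring. apply Rabs_triang. }
      pose proof (l1d_le_normd d (vsub X (xn (phi N)))). pose proof (l1d_le_normd d (vsub (xn (phi N)) y)).
      rewrite normd_sym in HN. pose proof (Rabs_pos (tn (phi N) - t)).
      pose proof (pos_INR d). pose proof (normd_nonneg d (vsub X (xn (phi N)))). pose proof (normd_nonneg d (vsub (xn (phi N)) y)).
      assert (INR d * normd d (vsub X (xn (phi N))) <= INR d * e) by (apply Rmult_le_compat_l; lra).
      assert (INR d * normd d (vsub (xn (phi N)) y) <= INR d * e) by (apply Rmult_le_compat_l; lra).
      assert (INR d * e + INR d * e < eps).
      { unfold e. apply Rmult_lt_reg_r with (INR d + 1); [lra|]. field_simplify; lra. }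
      lra.
Qed.

Lemma min_attain : forall d T Om f, bounded_domain d Om -> 0 <= T -> cont2_on d (cQ d T Om) f ->
  exists t x, cQ d T Om t x /\ forall t' x', cQ d T Om t' x' -> f t x <= f t' x'.
Proof.
  intros d T Om f HOm HT Hf.
  assert (Hne : exists t x, cQ d T Om t x).
  { destruct HOm as [HOin [[y0 Hy0] [Hop _]]]. exists 0, y0. split; [lra|].
    split; [auto|]. intros eps He. exists y0; split; auto. rewrite normd_vsub_self; auto. }
  assert (Hlow : exists m, forall t x, cQ d T Om t x -> m <= f t x).
  { apply NNPP; intro Hn.
    assert (Hs : forall n : nat, exists p : R * (nat -> R), cQ d T Om (fst p) (snd p) /\ f (fst p) (snd p) < - INR n).
    { intros n. apply NNPP; intro Hn2. apply Hn. exists (- INR n). intros t x Hc.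
      apply Rnot_lt_le; intro Hlt. apply Hn2. exists (t, x). simpl; auto. }
    set (p := fun n => proj1_sig (constructive_indefinite_description _ (Hs n))).
    assert (Hp : forall n, cQ d T Om (fst (p n)) (snd (p n)) /\ f (fst (p n)) (snd (p n)) < - INR n).
    { intros n. unfold p. destruct (constructive_indefinite_description _ (Hs n)); auto. }
    destruct (cQ_extract d T Om (fun n => fst (p n)) (fun n => snd (p n)) HOm (fun n => proj1 (Hp n)))
      as [phi [t [X [Hphi [HcX Hcv]]]]].
    destruct (Hf t X HcX 1 Rlt_0_1) as [del [Hdel Hd]].
    destruct (Hcv del Hdel) as [N HN].
    destruct (INR_archimed 1 (Rabs (f t X) + 1) Rlt_0_1) as [K HK].
    set (n := max N K). specialize (HN n ltac:(lia)).
    specialize (Hd _ _ (proj1 (Hp (phi n))) HN). destruct (Hp (phi n)) as [_ Hlt].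
    assert (INR K <= INR (phi n)) by (apply le_INR; pose proof (sincr_ge phi Hphi n); lia).
    apply Rabs_def2 in Hd. pose proof (Rle_abs (f t X)). pose proof (Rabs_Ropp (f t X)). pose proof (Rle_abs (- f t X)). lra. }
  destruct Hlow as [m0 Hm0].
  set (E := fun y => exists t x, cQ d T Om t x /\ y = - f t x).
  destruct (completeness E) as [s [Hub Hlub]].
  { exists (- m0). intros y [t [x [Hc ->]]]. specialize (Hm0 t x Hc). lra. }
  { destruct Hne as [t [x Hc]]. exists (- f t x). exists t, x. auto. }
  assert (Hs : forall n : nat, exists p : R * (nat -> R), cQ d T Om (fst p) (snd p) /\ f (fst p) (snd p) < - s + / INR (S n)).
  { intros n. apply NNPP; intro Hn. 
    assert (Hb : is_upper_bound E (s - / INR (S n))).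
    { intros y [t [x [Hc ->]]]. apply Rnot_lt_le; intro Hlt. apply Hn. exists (t, x). cbn [fst snd]. split; auto. lra. }
    specialize (Hlub _ Hb). assert (0 < / INR (S n)) by (apply Rinv_0_lt_compat, lt_0_INR; lia). lra. }
  set (p := fun n => proj1_sig (constructive_indefinite_description _ (Hs n))).
  assert (Hp : forall n, cQ d T Om (fst (p n)) (snd (p n)) /\ f (fst (p n)) (snd (p n)) < - s + / INR (S n)).
  { intros n. unfold p. destruct (constructive_indefinite_description _ (Hs n)); auto. }
  destruct (cQ_extract d T Om (fun n => fst (p n)) (fun n => snd (p n)) HOm (fun n => proj1 (Hp n)))
    as [phi [t [X [Hphi [HcX Hcv]]]]].
  exists t, X. split; auto.
  assert (Hge : forall t' x', cQ d T Om t' x' -> - s <= f t' x').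
  { intros t' x' Hc. assert (- f t' x' <= s) by (apply Hub; exists t', x'; auto). lra. }
  assert (Hle : f t X <= - s).
  { apply Rnot_lt_le; intro Hlt. set (eps := (f t X + s) / 2).
    destruct (Hf t X HcX eps ltac:(unfold eps; lra)) as [del [Hdel Hd]].
    destruct (Hcv del Hdel) as [N HN].
    destruct (archimed_cor1 eps ltac:(unfold eps; lra)) as [K [HK HK0]].
    set (n := max N K). specialize (HN n ltac:(lia)).
    specialize (Hd _ _ (proj1 (Hp (phi n))) HN). destruct (Hp (phi n)) as [_ Hlt2].
    assert (/ INR (S (phi n)) <= / INR K).
    { apply Rinv_le_contravar; [apply lt_0_INR; lia| apply le_INR]. pose proof (sincr_ge phi Hphi n). lia. }
    apply Rabs_def2 in Hd. unfold eps in *. lra. }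
  intros t' x' Hc. specialize (Hge t' x' Hc). lra.
Qed.


Lemma slice_contC : forall d T Om f t, 0 <= t <= T -> cont2_on d (cQ d T Om) f -> contC d Om (fun y => f t y).
Proof.
  intros d T Om f t Ht Hf x Hx eps He. destruct (Hf t x (conj Ht Hx) eps He) as [del [Hdel H]].
  exists del. split; auto. intros y Hy Hn. apply H; [split; auto|]. rewrite Rminus_diag, Rabs_R0. lra.
Qed.

Lemma closure_limit_ge : forall d Om (phi : (nat -> R) -> R) xs c, OpenIn d Om -> closure d Om xs ->
  (forall eps, 0 < eps -> exists del, 0 < del /\ forall y, closure d Om y -> normd d (vsub y xs) < del -> Rabs (phi y - phi xs) < eps) ->
  (exists del, 0 < del /\ forall y, Om y -> normd d (vsub y xs) < del -> c <= phi y) ->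
  c <= phi xs.
Proof.
  intros d Om phi xs c Hop Hxs Hc [del [Hdel Hge]]. apply Rnot_lt_le; intro Hlt.
  destruct (Hc (c - phi xs) ltac:(lra)) as [del2 [Hdel2 H2]].
  destruct Hxs as [Hin Hcl]. destruct (Hcl (Rmin del del2) (Rmin_pos _ _ Hdel Hdel2)) as [y [Hy Hn]].
  rewrite normd_sym in Hn. pose proof (Rmin_l del del2). pose proof (Rmin_r del del2).
  specialize (Hge y Hy ltac:(lra)). specialize (H2 y (Om_closure d Om y Hop Hy) ltac:(lra)).
  apply Rabs_def2 in H2. lra.
Qed.

Lemma maxprin : forall d T Om (n : (nat -> R) -> nat -> R) (w wt : R -> (nat -> R) -> R)
  (wx : nat -> R -> (nat -> R) -> R) (wxx : nat -> nat -> R -> (nat -> R) -> R)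
  (v : nat -> R -> (nat -> R) -> R) (res : R -> (nat -> R) -> R) a,
  bounded_domain d Om -> C11_boundary_normal d Om n -> 0 < T -> 0 <= a ->
  cont2_on d (cQ d T Om) w -> cont2_on d (cQ d T Om) wt ->
  (forall i, (i < d)%nat -> cont2_on d (cQ d T Om) (wx i)) ->
  (forall i j, (i < d)%nat -> (j < d)%nat -> cont2_on d (cQ d T Om) (wxx i j)) ->
  cont2_on d (cQ d T Om) res ->
  (forall t x, cQ d T Om t x -> res t x = wt t x + sumd d (fun i => v i t x * wx i t x) - a * sumd d (fun i => wxx i i t x)) ->
  (forall t x, oQ T Om t x ->
     derivable_pt_lim (fun s => w s x) t (wt t x) /\
     (forall i, (i < d)%nat -> has_partial (fun y => w t y) i x (wx i t x)) /\
     (forall i j, (i < d)%nat -> (j < d)%nat -> has_partial (fun y => wx i t y) j x (wxx i j t x))) ->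
  (forall t x, 0 < t < T -> bdry d Om x -> sumd d (fun i => wx i t x * n x i) = 0) ->
  (forall x, closure d Om x -> 0 <= w 0 x) ->
  (forall t x, oQ T Om t x -> w t x < 0 -> 0 <= res t x) ->
  forall t x, oQ T Om t x -> 0 <= w t x.
Proof.
  intros d T Om n w wt wx wxx v res a HOm Hn HT Ha Cw Cwt Cwx Cwxx Cres Hres Hder Hneu Hinit Hpos t0 x0 Hox0.
  pose proof (bd_open d Om HOm) as Hop.
  apply Rnot_lt_le; intro Hneg. destruct Hox0 as [Ht0 HOx0].
  set (eps := - w t0 x0 / (2 * t0)).
  assert (Heps : 0 < eps) by (unfold eps; apply Rdiv_lt_0_compat; lra).
  set (u := fun t x => w t x + eps * t).
  assert (HcQ : forall t x, cQ d t0 Om t x -> cQ d T Om t x) by (intros t x [Ht Hx]; split; [lra|auto]).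
  assert (Cu : cont2_on d (cQ d t0 Om) u).
  { intros t x Hc e He.
    destruct (Cw t x (HcQ t x Hc) (e/2)) as [d1 [Hd1 H1]]; [lra|].
    exists (Rmin d1 (e / 2 / (eps + 1))). split.
    { apply Rmin_pos; auto. apply Rdiv_lt_0_compat; lra. }
    intros t' x' Hc' Hdist. pose proof (Rmin_l d1 (e / 2 / (eps + 1))). pose proof (Rmin_r d1 (e / 2 / (eps + 1))).
    pose proof (Rabs_pos (t' - t)). pose proof (normd_nonneg d (vsub x' x)).
    specialize (H1 t' x' (HcQ t' x' Hc') ltac:(lra)). unfold u.
    replace (w t' x' + eps * t' - (w t x + eps * t)) with ((w t' x' - w t x) + eps * (t' - t)) by ring.
    eapply Rle_lt_trans; [apply Rabs_triang|]. rewrite Rabs_mult, (Rabs_pos_eq eps) by lra.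
    assert (eps * Rabs (t' - t) <= e / 2).
    { apply Rle_trans with (eps * (e / 2 / (eps + 1))). apply Rmult_le_compat_l; lra.
      apply Rmult_le_reg_r with (eps + 1); [lra|]. field_simplify; [|lra]. nra. }
    lra. }
  destruct (min_attain d t0 Om u HOm ltac:(lra) Cu) as [ts [xs [[Hts Hxs] Hmin]]].
  assert (Hux0 : u ts xs <= u t0 x0).
  { apply Hmin. split; [lra|]. apply Om_closure; auto. }
  assert (Hu0 : u t0 x0 = w t0 x0 / 2) by (unfold u, eps; field; lra).
  assert (Hts0 : 0 < ts).
  { destruct (Rle_lt_dec ts 0) as [Hle|]; auto. assert (ts = 0) by lra. subst ts.
    specialize (Hinit xs Hxs). unfold u in Hux0, Hu0. lra. }
  assert (HcQs : cQ d T Om ts xs) by (split; [lra|auto]).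
  assert (Hws : w ts xs < 0) by (unfold u in Hux0, Hu0; assert (0 < eps * ts) by (apply Rmult_lt_0_compat; lra); lra).
  assert (HoQ : forall y, Om y -> oQ T Om ts y) by (intros y Hy; split; [lra|auto]).
  assert (Hwt : wt ts xs <= - eps).
  { apply Rnot_lt_le; intro Hlt. set (eta := (wt ts xs + eps) / 2).
    destruct (Cwt ts xs HcQs eta ltac:(unfold eta; lra)) as [d1 [Hd1 H1]].
    set (h := Rmin (d1 / 2) (ts / 2)).
    assert (Hh : 0 < h) by (unfold h; apply Rmin_pos; lra).
    assert (Hh1 : h <= d1 / 2) by apply Rmin_l. assert (Hh2 : h <= ts / 2) by apply Rmin_r.
    assert (Hge : h * eta <= u ts xs - u (ts - h) xs).
    { apply (closure_limit_ge d Om (fun y => u ts y - u (ts - h) y)); auto.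
      - intros e He.
        assert (Hq1 : cQ d t0 Om ts xs) by (split; [lra|auto]).
        assert (Hq2 : cQ d t0 Om (ts - h) xs) by (split; [lra|auto]).
        destruct (Cu ts xs Hq1 (e/2)) as [e1 [He1 Hu1]]; [lra|].
        destruct (Cu (ts - h) xs Hq2 (e/2)) as [e2 [He2 Hu2]]; [lra|].
        exists (Rmin e1 e2). split; [apply Rmin_pos; auto|]. intros y Hy Hny.
        pose proof (Rmin_l e1 e2). pose proof (Rmin_r e1 e2).
        assert (Hq3 : cQ d t0 Om ts y) by (split; [lra|auto]).
        assert (Hq4 : cQ d t0 Om (ts - h) y) by (split; [lra|auto]).
        specialize (Hu1 ts y Hq3).
        specialize (Hu2 (ts - h) y Hq4).
        rewrite Rminus_diag, Rabs_R0 in Hu1, Hu2. specialize (Hu1 ltac:(lra)). specialize (Hu2 ltac:(lra)).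
        apply Rabs_def2 in Hu1. apply Rabs_def2 in Hu2. apply Rabs_def1; lra.
      - exists (d1 / 2). split; [lra|]. intros y Hy Hny.
        destruct (MVT_cor2 (fun s => w s y) (fun s => wt s y) (ts - h) ts) as [c [Hc1 Hc2]]; [lra| |].
        { intros c Hc. apply (Hder c y). split; [lra|auto]. }
        assert (Hwc : Rabs (wt c y - wt ts xs) < eta).
        { apply H1. split; [lra| apply Om_closure; auto]. pose proof (Rabs_pos (c - ts)).
          assert (Rabs (c - ts) < d1/2) by (rewrite Rabs_left; lra). lra. }
        apply Rabs_def2 in Hwc. unfold u. unfold eta in *. 
        replace (ts - (ts - h)) with h in Hc2 by ring. nra. }
    assert (u ts xs <= u (ts - h) xs) by (apply Hmin; split; [lra|auto]).
    unfold eta in Hge. nra. }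
  assert (Hsp : (forall i, (i < d)%nat -> wx i ts xs = 0) /\ 0 <= sumd d (fun i => wxx i i ts xs)).
  { apply (space_min d Om n (fun y => w ts y) (fun i y => wx i ts y) (fun i j y => wxx i j ts y) xs HOm Hn).
    - intros z i Hz Hi. apply (Hder ts z (HoQ z Hz)); auto.
    - intros z i j Hz Hi Hj. apply (Hder ts z (HoQ z Hz)); auto.
    - apply (slice_contC d T); auto; lra.
    - intros i Hi. apply (slice_contC d T); auto; lra.
    - intros i j Hi Hj. apply (slice_contC d T); auto; lra.
    - auto.
    - intros y Hy. assert (u ts xs <= u ts y) by (apply Hmin; split; [lra|auto]). unfold u in H. lra.
    - intros Hb. apply Hneu; auto. lra. }
  destruct Hsp as [Hgrad Hlap].
  assert (Hr : 0 <= res ts xs).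
  { apply (closure_limit_ge d Om (fun y => res ts y)); auto.
    - intros e He. apply (slice_contC d T Om res ts); auto. lra.
    - destruct (Cw ts xs HcQs (- w ts xs) ltac:(lra)) as [d1 [Hd1 H1]].
      exists d1. split; auto. intros y Hy Hny. apply Hpos; [apply HoQ; auto|].
      specialize (H1 ts y ltac:(split; [lra| apply Om_closure; auto])).
      rewrite Rminus_diag, Rabs_R0 in H1. specialize (H1 ltac:(lra)). apply Rabs_def2 in H1. lra. }
  rewrite Hres in Hr by auto.
  rewrite (sumd_zero d (fun i => v i ts xs * wx i ts xs)) in Hr by (intros i Hi; rewrite Hgrad; auto; ring).
  nra.
Qed.


Lemma fine_app : forall del a x b P Q, fine del a x P -> fine del x b Q -> fine del a b (P ++ Q).
Proof.
  intros del a x b P. revert a. induction P as [|[[u t] w] P IH]; intros a Q HP HQ; simpl in *.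
  - subst; auto.
  - destruct HP as [H1 [H2 [H3 [H4 H5]]]]. repeat split; auto; try lra; eapply IH; eauto.
Qed.

Definition it_u (x : R * R * R) : R := fst (fst x).
Definition it_t (x : R * R * R) : R := snd (fst x).
Definition it_w (x : R * R * R) : R := snd x.

Lemma fine_props : forall del P a b, fine del a b P ->
  a <= b /\ forall x, In x P -> a <= it_u x /\ it_u x <= it_t x <= it_w x /\ it_w x <= b /\
     it_t x - del (it_t x) < it_u x /\ it_w x < it_t x + del (it_t x).
Proof.
  intros del P. induction P as [|[[u t] w] P IH]; intros a b H; simpl in *.
  - subst. split; [lra| intros x []].
  - destruct H as [H1 [H2 [H3 [H4 H5]]]]. destruct (IH _ _ H5) as [Hwb Hall]. split; [lra|].
    intros x [<-|Hx]; unfold it_u, it_t, it_w; simpl.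
    + repeat split; lra.
    + destruct (Hall x Hx) as [A [B [C [D E]]]]. unfold it_u, it_t, it_w in *. repeat split; lra.
Qed.

Lemma cousin : forall (del : R -> R) a b, a <= b -> (forall t, a <= t <= b -> 0 < del t) ->
  exists P, fine del a b P.
Proof.
  intros del a b Hab Hdel.
  set (S := fun x => a <= x <= b /\ exists P, fine del a x P).
  destruct (completeness S) as [c [Hub Hlub]].
  { exists b. intros x [Hx _]. lra. }
  { exists a. split; [lra|]. exists nil. simpl. auto. }
  assert (Hac : a <= c) by (apply Hub; split; [lra|]; exists nil; simpl; auto).
  assert (Hcb : c <= b) by (apply Hlub; intros x [Hx _]; lra).
  assert (Hdc : 0 < del c) by (apply Hdel; lra).
  assert (Hx : exists x, S x /\ c - del c < x).
  { apply NNPP; intro Hn. assert (c <= c - del c); [|lra]. apply Hlub. intros x Hx.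
    apply Rnot_lt_le; intro Hlt. apply Hn. exists x; auto. }
  destruct Hx as [x [[Hx [P HP]] Hxc]].
  assert (Hxc2 : x <= c) by (apply Hub; split; auto; exists P; auto).
  set (c' := Rmin b (c + del c / 2)).
  assert (Hc' : S c').
  { split. { unfold c'. split; [apply Rmin_glb; lra| apply Rmin_l]. }
    exists (P ++ [(x, c, c')]). apply fine_app with x; auto. simpl.
    pose proof (Rmin_l b (c + del c / 2)). pose proof (Rmin_r b (c + del c / 2)).
    assert (c <= c'). { unfold c'. apply Rmin_glb; lra. }
    fold c' in H, H0. repeat split; lra. }
  assert (c' <= c) by (apply Hub; auto).
  assert (Hbc : b = c).
  { unfold c' in H. destruct (Rle_dec b (c + del c / 2)).
    - rewrite Rmin_left in H by auto. lra.
    - rewrite Rmin_right in H by lra. lra. }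
  destruct Hc' as [_ [Q HQ]]. exists Q.
  assert (Ec : c' = b) by (unfold c'; rewrite Rmin_left; lra). rewrite Ec in HQ. auto.
Qed.

Definition lsum {A : Type} (f : A -> R) (L : list A) : R := fold_right (fun x acc => f x + acc) 0 L.

Lemma lsum_le : forall A (f g : A -> R) L, (forall x, In x L -> f x <= g x) -> lsum f L <= lsum g L.
Proof. intros A f g L. induction L; simpl; intros H; [lra|].
  assert (f a <= g a) by auto. assert (lsum f L <= lsum g L) by auto. lra. Qed.

Lemma lsum_nonneg : forall A (f : A -> R) L, (forall x, In x L -> 0 <= f x) -> 0 <= lsum f L.
Proof. intros A f L. induction L; simpl; intros H; [lra|].
  assert (0 <= f a) by auto. assert (0 <= lsum f L) by auto. lra. Qed.

Lemma lsum_scal : forall A (f : A -> R) c L, lsum (fun x => c * f x) L = c * lsum f L.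
Proof. intros. induction L; simpl; [ring|]. rewrite IHL. ring. Qed.

Lemma lsum_opp : forall A (f : A -> R) L, lsum (fun x => - f x) L = - lsum f L.
Proof. intros. induction L; simpl; [ring|]. rewrite IHL. ring. Qed.

Lemma lsum_filter : forall A (f : A -> R) (p : A -> bool) L,
  lsum f L = lsum f (filter p L) + lsum f (filter (fun x => negb (p x)) L).
Proof. intros. induction L; simpl; [ring|]. destruct (p a); simpl; rewrite IHL; ring. Qed.

Lemma lsum_filter_zero : forall A (f : A -> R) (p : A -> bool) L,
  (forall x, p x = false -> f x = 0) -> lsum f L = lsum f (filter p L).
Proof. intros. induction L; simpl; [ring|]. destruct (p a) eqn:E; simpl; rewrite IHL; auto.
  rewrite H; auto; ring. Qed.

Lemma rsum_lsum : forall f P, rsum f P = lsum (fun x => f (it_t x) * (it_w x - it_u x)) P.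
Proof. intros f P. induction P as [|[[u t] w] P IH]; simpl; auto. rewrite IH. reflexivity. Qed.

Fixpoint ordq (L : list (R * R * R)) : Prop :=
  match L with
  | nil => True
  | x :: l => (forall y, In y l -> it_w x <= it_u y) /\ ordq l
  end.

Lemma ordq_filter : forall p L, ordq L -> ordq (filter p L).
Proof. intros p L. induction L; simpl; auto. intros [H1 H2]. destruct (p a); simpl; auto.
  split; auto. intros y Hy. apply filter_In in Hy. apply H1; tauto. Qed.

Lemma fine_ordq : forall del P a b, fine del a b P -> ordq P.
Proof.
  intros del P. induction P as [|[[u t] w] P IH]; intros a b H; simpl in *; auto.
  destruct H as [_ [_ [_ [_ H5]]]]. split; [|eapply IH; eauto].
  intros y Hy. destruct (fine_props _ _ _ _ H5) as [_ Hall]. apply Hall; auto.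
Qed.

Lemma ordq_len : forall L al be, al <= be -> ordq L ->
  (forall x, In x L -> al <= it_u x /\ it_u x <= it_w x /\ it_w x <= be) ->
  lsum (fun x => it_w x - it_u x) L <= be - al.
Proof.
  induction L as [|x L IH]; intros al be Hab Ho H; simpl; [lra|].
  destruct Ho as [Ho1 Ho2]. destruct (H x (or_introl eq_refl)) as [A [B C]].
  assert (lsum (fun x => it_w x - it_u x) L <= be - it_w x).
  { apply IH; auto. intros y Hy. destruct (H y (or_intror Hy)) as [A' [B' C']]. split; auto. }
  lra.
Qed.

Lemma filter_nil : forall A (p : A -> bool) L, (forall x, In x L -> p x = false) -> filter p L = nil.
Proof. intros A p L. induction L; simpl; auto. intros H. rewrite H by auto. apply IHL. auto. Qed.

Lemma filter_filter_imp : forall A (p q : A -> bool) L, (forall x, p x = true -> q x = true) ->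
  filter p (filter q L) = filter p L.
Proof. intros A p q L H. induction L; simpl; auto. destruct (q a) eqn:Eq; simpl.
  - destruct (p a); rewrite IHL; auto.
  - destruct (p a) eqn:Ep; auto. rewrite H in Eq; auto. discriminate. Qed.

Lemma group_bound : forall (L : list (R * R * R)) (lab : R * R * R -> nat) (M : nat) (W B : nat -> R),
  (forall m, 0 <= W m) ->
  (forall x, In x L -> (lab x <= M)%nat) ->
  (forall m, (m <= M)%nat -> lsum (fun x => it_w x - it_u x) (filter (fun x => Nat.eqb (lab x) m) L) <= B m) ->
  lsum (fun x => W (lab x) * (it_w x - it_u x)) L <= sum_f_R0 (fun m => W m * B m) M.
Proof.
  intros L lab M W B HW. revert L. induction M; intros L Hlab HB.
  - rewrite (lsum_filter _ _ (fun x => Nat.eqb (lab x) 0)).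
    rewrite (filter_nil _ (fun x => negb (Nat.eqb (lab x) 0))).
    2: { intros x Hx. specialize (Hlab x Hx). replace (lab x) with 0%nat by lia. reflexivity. }
    simpl. rewrite Rplus_0_r.
    rewrite (lsum_le _ _ (fun x => W 0%nat * (it_w x - it_u x))).
    + rewrite lsum_scal. apply Rmult_le_compat_l; auto.
    + intros x Hx. apply filter_In in Hx. destruct Hx as [_ Hx]. apply Nat.eqb_eq in Hx. rewrite Hx. lra.
  - rewrite (lsum_filter _ _ (fun x => Nat.eqb (lab x) (S M))). simpl sum_f_R0.
    assert (H1 : lsum (fun x => W (lab x) * (it_w x - it_u x)) (filter (fun x => Nat.eqb (lab x) (S M)) L)
                 <= W (S M) * B (S M)).
    { rewrite (lsum_le _ _ (fun x => W (S M) * (it_w x - it_u x))).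
      + rewrite lsum_scal. apply Rmult_le_compat_l; auto.
      + intros x Hx. apply filter_In in Hx. destruct Hx as [_ Hx]. apply Nat.eqb_eq in Hx. rewrite Hx. lra. }
    assert (H2 : lsum (fun x => W (lab x) * (it_w x - it_u x)) (filter (fun x => negb (Nat.eqb (lab x) (S M))) L)
                 <= sum_f_R0 (fun m => W m * B m) M).
    { apply IHM.
      - intros x Hx. apply filter_In in Hx. destruct Hx as [Hx Hne]. specialize (Hlab x Hx).
        apply Bool.negb_true_iff, Nat.eqb_neq in Hne. lia.
      - intros m Hm. rewrite filter_filter_imp. apply HB; lia.
        intros x Hx. apply Nat.eqb_eq in Hx. apply Bool.negb_true_iff, Nat.eqb_neq. lia. }
    lra.
Qed.


Lemma fine_mono : forall (del del0 : R -> R) P a b, (forall t, del t <= del0 t) -> fine del a b P -> fine del0 a b P.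
Proof.
  intros del del0 P. induction P as [|[[u t] w] P IH]; intros a b H HP; simpl in *; auto.
  destruct HP as [H1 [H2 [H3 [H4 H5]]]]. pose proof (H t). repeat split; try lra. eapply IH; eauto.
Qed.

Lemma geom_sum : forall K, sum_f_R0 (fun k => / 2 ^ (S k)) K = 1 - / 2 ^ (S K).
Proof.
  induction K; [simpl; field|]. rewrite tech5, IHK.
  assert (2 ^ S (S K) = 2 * 2 ^ S K) by reflexivity. rewrite H.
  assert (2 ^ S K <> 0) by (apply pow_nonzero; lra). field; auto.
Qed.

Definition maxl (g : R * R * R -> nat) (L : list (R * R * R)) : nat := fold_right (fun x m => max (g x) m) O L.

Lemma maxl_ge : forall g L x, In x L -> (g x <= maxl g L)%nat.
Proof. intros g L. induction L; simpl; intros x Hx; [destruct Hx|]. destruct Hx as [<-|Hx]; [lia|].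
  specialize (IHL x Hx). lia. Qed.

Lemma prodd_1 : forall f, prodd 1 f = f O.
Proof. intros. unfold prodd. simpl. ring. Qed.

Lemma sum_f_R0_le : forall f g K, (forall k, (k <= K)%nat -> f k <= g k) -> sum_f_R0 f K <= sum_f_R0 g K.
Proof. intros f g K H. induction K; simpl; [apply H; lia|].
  assert (f (S K) <= g (S K)) by (apply H; lia). assert (sum_f_R0 f K <= sum_f_R0 g K) by (apply IHK; intros; apply H; lia). lra. Qed.

Lemma lsum_ext_in : forall A (f g : A -> R) L, (forall x, In x L -> f x = g x) -> lsum f L = lsum g L.
Proof. intros A f g L. induction L; simpl; intros H; auto. rewrite H, IHL; auto. Qed.

Definition decb (P : Prop) : bool := if excluded_middle_informative P then true else false.

Lemma HK_nonneg_ae : forall f a b I (N : R -> Prop), HKint f a b I -> null 1 (fun z => N (z O)) ->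
  (forall t, a <= t <= b -> ~ N t -> 0 <= f t) -> 0 <= I.
Proof.
  intros f a b I N [Hab HK] Hnull Hpos.
  apply Rnot_lt_le; intro HIneg.
  set (eps := - I / 2).
  assert (Heps : 0 < eps) by (unfold eps; lra).
  destruct (HK eps Heps) as [del0 [Hdel0 Hgauge]].
  set (e := fun j : nat => eps / (8 * INR (S j) * 2 ^ j)).
  assert (He : forall j, 0 < e j).
  { intros j. unfold e. apply Rdiv_lt_0_compat; auto. apply Rmult_lt_0_compat; [|apply pow_lt; lra].
    apply Rmult_lt_0_compat; [lra| apply lt_0_INR; lia]. }
  assert (Hcov : forall j, exists LH : (nat -> nat -> R) * (nat -> nat -> R),
     (forall k i, fst LH k i <= snd LH k i) /\
     (forall z, N (z O) -> exists k, forall i, (i < 1)%nat -> fst LH k i <= z i <= snd LH k i) /\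
     (forall K, sum_f_R0 (fun k => prodd 1 (fun i => snd LH k i - fst LH k i)) K <= e j)).
  { intros j. destruct (Hnull (e j) (He j)) as [lo [hi H]]. exists (lo, hi). exact H. }
  set (LH := fun j => proj1_sig (constructive_indefinite_description _ (Hcov j))).
  set (LO := fun j k => fst (LH j) k O). set (HI := fun j k => snd (LH j) k O).
  assert (HLH : forall j, (forall k, LO j k <= HI j k) /\
      (forall t, N t -> exists k, LO j k <= t <= HI j k) /\
      (forall K, sum_f_R0 (fun k => HI j k - LO j k) K <= e j)).
  { intros j. unfold LO, HI, LH. destruct (constructive_indefinite_description _ (Hcov j)) as [[lo hi] [H1 [H2 H3]]].
    simpl. split; [|split].
    - intros k. apply H1.
    - intros t Ht. destruct (H2 (fun _ => t) Ht) as [k Hk]. exists k. apply (Hk O); lia.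
    - intros K. specialize (H3 K). eapply Rle_trans; [|exact H3]. apply sum_f_R0_le. intros k _. rewrite prodd_1. simpl. lra. }
  set (jt := fun t => Z.to_nat (up (Rabs (f t)))).
  assert (Hjt : forall t, Rabs (f t) <= INR (jt t)).
  { intros t. unfold jt. destruct (archimed (Rabs (f t))) as [H1 _].
    pose proof (Rabs_pos (f t)).
    assert (0 <= up (Rabs (f t)))%Z.
    { apply le_IZR. lra. }
    rewrite INR_IZR_INZ, Z2Nat.id; auto. lra. }
  assert (Hkex : forall t, exists k, N t -> LO (jt t) k <= t <= HI (jt t) k).
  { intros t. destruct (classic (N t)) as [Hn|Hn].
    - destruct (proj1 (proj2 (HLH (jt t))) t Hn) as [k Hk]. exists k; auto.
    - exists O; tauto. }
  set (kt := fun t => proj1_sig (constructive_indefinite_description _ (Hkex t))).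
  assert (Hkt : forall t, N t -> LO (jt t) (kt t) <= t <= HI (jt t) (kt t)).
  { intros t. unfold kt. destruct (constructive_indefinite_description _ (Hkex t)); auto. }
  set (rho := fun j k => e j / 2 ^ (S k)).
  assert (Hrho : forall j k, 0 < rho j k) by (intros; unfold rho; apply Rdiv_lt_0_compat; [auto| apply pow_lt; lra]).
  set (del := fun t => if excluded_middle_informative (N t) then Rmin (del0 t) (rho (jt t) (kt t)) else del0 t).
  assert (Hdel : forall t, del t <= del0 t).
  { intros t. unfold del. destruct (excluded_middle_informative (N t)); [apply Rmin_l|lra]. }
  destruct (cousin del a b Hab) as [P HP].
  { intros t Ht. unfold del. destruct (excluded_middle_informative (N t)); [apply Rmin_pos; auto|]; apply Hdel0; auto. }
  specialize (Hgauge P (fine_mono del del0 P a b Hdel HP)).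
  destruct (fine_props _ _ _ _ HP) as [_ Hprops].
  set (len := fun x : R * R * R => it_w x - it_u x).
  set (bad := fun x : R * R * R => decb (N (it_t x))).
  set (lab := fun x : R * R * R => jt (it_t x)).
  set (L := filter bad P).
  assert (HbadL : forall x, In x L -> In x P /\ N (it_t x)).
  { intros x Hx. apply filter_In in Hx. destruct Hx as [Hx Hb]. split; auto. unfold bad, decb in Hb.
    destruct (excluded_middle_informative (N (it_t x))); auto; discriminate. }
  set (g := fun x : R * R * R => (if excluded_middle_informative (N (it_t x)) then INR (S (lab x)) else 0) * len x).
  assert (Hlow : - lsum (fun x => INR (S (lab x)) * len x) L <= rsum f P).
  { assert (E1 : lsum (fun x => INR (S (lab x)) * len x) L = lsum g P).
    { rewrite (lsum_filter_zero _ g bad P).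
      - unfold L. apply lsum_ext_in. intros x Hx. apply filter_In in Hx. destruct Hx as [_ Hb].
        unfold g, bad, decb in *. destruct (excluded_middle_informative (N (it_t x))); [auto|discriminate].
      - intros x Hx. unfold g, bad, decb in *. destruct (excluded_middle_informative (N (it_t x))); [discriminate|ring]. }
    rewrite E1, rsum_lsum, <- lsum_opp. apply lsum_le. intros x Hx.
    destruct (Hprops x Hx) as [A [B [C _]]]. unfold g, len.
    destruct (excluded_middle_informative (N (it_t x))) as [Hn|Hn].
    - specialize (Hjt (it_t x)). unfold lab. rewrite S_INR.
      pose proof (Rle_abs (f (it_t x))). pose proof (Rabs_Ropp (f (it_t x))). pose proof (Rle_abs (- f (it_t x))).
      assert (0 <= it_w x - it_u x) by lra. nra.
    - assert (0 <= f (it_t x)) by (apply Hpos; [lra|auto]). assert (0 <= it_w x - it_u x) by lra. nra. }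
  assert (Hord : ordq P) by (eapply fine_ordq; eauto).
  assert (Hinner : forall m, lsum len (filter (fun x => Nat.eqb (lab x) m) L) <= 3 * e m).
  { intros m. set (Lm := filter (fun x => Nat.eqb (lab x) m) L).
    set (lab2 := fun x : R * R * R => kt (it_t x)).
    assert (Hg : lsum (fun x => 1 * (it_w x - it_u x)) Lm <=
                 sum_f_R0 (fun k => 1 * (HI m k - LO m k + 2 * rho m k)) (maxl lab2 Lm)).
    { apply (group_bound Lm lab2 (maxl lab2 Lm) (fun _ => 1) (fun k => HI m k - LO m k + 2 * rho m k)).
      - intros; lra.
      - intros x Hx. apply maxl_ge; auto.
      - intros k Hk.
        replace (HI m k - LO m k + 2 * rho m k) with ((HI m k + rho m k) - (LO m k - rho m k)) by ring.
        apply ordq_len.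
        + pose proof (proj1 (HLH m) k). pose proof (Hrho m k). lra.
        + unfold Lm, L. apply ordq_filter, ordq_filter, ordq_filter; auto.
        + intros x Hx. apply filter_In in Hx. destruct Hx as [Hx Hk2]. unfold Lm in Hx.
          apply filter_In in Hx. destruct Hx as [Hx Hm]. destruct (HbadL x Hx) as [HxP HN].
          apply Nat.eqb_eq in Hk2. apply Nat.eqb_eq in Hm. unfold lab2 in Hk2. unfold lab in Hm.
          destruct (Hprops x HxP) as [A [B [C [D E]]]].
          specialize (Hkt (it_t x) HN). rewrite Hm, Hk2 in Hkt.
          assert (Hd : del (it_t x) <= rho m k).
          { unfold del. destruct (excluded_middle_informative (N (it_t x))) as [_|]; [|contradiction].
            rewrite Hm, Hk2. apply Rmin_r. }
          lra. }
    rewrite (lsum_ext_in _ (fun x => 1 * (it_w x - it_u x)) len) in Hg by (intros; unfold len; ring).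
    eapply Rle_trans; [exact Hg|].
    eapply Rle_trans; [apply (sum_f_R0_le _ (fun k => (HI m k - LO m k) + / 2 ^ (S k) * (2 * e m)))|].
    { intros k _. unfold rho. unfold Rdiv. lra. }
    rewrite plus_sum. rewrite <- (scal_sum (fun k => / 2 ^ S k)). 
    rewrite geom_sum. 
    assert (0 < / 2 ^ S (maxl lab2 Lm)) by (apply Rinv_0_lt_compat, pow_lt; lra).
    pose proof (proj2 (proj2 (HLH m)) (maxl lab2 Lm)). pose proof (He m).
    nra. }
  assert (Hout : lsum (fun x => INR (S (lab x)) * len x) L <= sum_f_R0 (fun m => INR (S m) * (3 * e m)) (maxl lab L)).
  { apply (group_bound L lab (maxl lab L) (fun m => INR (S m)) (fun m => 3 * e m)).
    - intros m. apply pos_INR.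
    - intros x Hx. apply maxl_ge; auto.
    - intros m _. apply Hinner. }
  assert (Hsum : sum_f_R0 (fun m => INR (S m) * (3 * e m)) (maxl lab L) <= 3 * eps / 4).
  { rewrite (sum_f_R0_le _ (fun m => / 2 ^ (S m) * (3 * eps / 4))).
    - rewrite <- (scal_sum (fun m => / 2 ^ S m)). rewrite geom_sum.
      assert (0 < / 2 ^ S (maxl lab L)) by (apply Rinv_0_lt_compat, pow_lt; lra). nra.
    - intros m _. unfold e. right. 
      assert (0 < INR (S m)) by (apply lt_0_INR; lia). assert (2 ^ m <> 0) by (apply pow_nonzero; lra).
      replace (2 ^ S m) with (2 * 2 ^ m) by reflexivity. field. split; auto; lra. }
  apply Rabs_def2 in Hgauge. unfold eps in *. lra.
Qed.


Lemma HKinf_nonneg_ae : forall f a I (N : R -> Prop), HKint_inf f a I -> null 1 (fun z => N (z O)) ->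
  (forall t, a <= t -> ~ N t -> 0 <= f t) -> 0 <= I.
Proof.
  intros f a I N [Hex Hcv] Hnull Hpos. apply Rnot_lt_le; intro Hlt.
  destruct (Hcv (- I) ltac:(lra)) as [B HB].
  set (b := Rmax B a).
  destruct (Hex b (Rmax_r B a)) as [J HJ].
  specialize (HB b J (Rmax_l B a) (Rmax_r B a) HJ).
  assert (0 <= J).
  { apply (HK_nonneg_ae f a b J N HJ Hnull). intros t Ht Hn. apply Hpos; auto; lra. }
  apply Rabs_def2 in HB. lra.
Qed.

Lemma sum_f_R0_zero : forall f K, (forall k, f k = 0) -> sum_f_R0 f K = 0.
Proof. intros f K H. induction K; simpl; rewrite H; [ring|]. rewrite IHK. ring. Qed.

Lemma null_empty1 : null 1 (fun _ => False).
Proof.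
  intros eps He. exists (fun _ _ => 0), (fun _ _ => 0). split; [intros; lra|]. split; [intros z []|].
  intros K. rewrite sum_f_R0_zero; [lra|]. intros k. rewrite prodd_1. ring.
Qed.

Lemma null_add_point : forall (N : R -> Prop) p, null 1 (fun z => N (z O)) -> null 1 (fun z => N (z O) \/ z O = p).
Proof.
  intros N p Hn eps He. destruct (Hn eps He) as [lo [hi [H1 [H2 H3]]]].
  exists (fun k i => match k with O => p | S k' => lo k' i end).
  exists (fun k i => match k with O => p | S k' => hi k' i end).
  split; [intros [|k] i; [lra| apply H1]|]. split.
  - intros z [Hz|Hz].
    + destruct (H2 z Hz) as [k Hk]. exists (S k). auto.
    + exists O. intros i Hi. replace i with O by lia. rewrite Hz. lra.
  - intros [|K].
    + simpl. rewrite prodd_1. lra.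
    + rewrite decomp_sum by lia. simpl pred. rewrite prodd_1. specialize (H3 K). lra.
Qed.


Lemma lsum_plus : forall A (f g : A -> R) L, lsum (fun x => f x + g x) L = lsum f L + lsum g L.
Proof. intros. induction L; simpl; [ring|]. rewrite IHL. ring. Qed.

Definition ind (lo hi x : R) : R := if excluded_middle_informative (lo <= x <= hi) then 1 else 0.

Lemma count_grid : forall al h lo hi M, 0 < h -> lo <= hi ->
  h * sumd M (fun m => ind lo hi (al + INR m * h)) <= Rmax 0 (Rmin hi (al + (INR M - 1) * h) - lo + h).
Proof.
  intros al h lo hi M Hh Hlh. induction M.
  - rewrite sumd_0. rewrite Rmult_0_r. apply Rmax_l.
  - rewrite sumd_S, Rmult_plus_distr_l. rewrite S_INR.
    replace (INR M + 1 - 1) with (INR M) by ring.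
    unfold ind at 2. destruct (excluded_middle_informative (lo <= al + INR M * h <= hi)) as [Hin|Hout].
    + assert (Rmin hi (al + (INR M - 1) * h) <= al + INR M * h - h).
      { eapply Rle_trans; [apply Rmin_r|]. lra. }
      rewrite (Rmin_right hi (al + INR M * h)) by lra.
      rewrite Rmax_right by lra.
      assert (Rmax 0 (Rmin hi (al + (INR M - 1) * h) - lo + h) <= al + INR M * h - lo).
      { apply Rmax_lub; lra. }
      lra.
    + rewrite Rmult_0_r, Rplus_0_r. eapply Rle_trans; [exact IHM|].
      apply Rle_max_compat_l. assert (Rmin hi (al + (INR M - 1) * h) <= Rmin hi (al + INR M * h)).
      { apply Rmin_glb; [apply Rmin_l|]. eapply Rle_trans; [apply Rmin_r|]. lra. }
      lra.
Qed.

Lemma count_grid' : forall al h lo hi M, 0 < h -> lo <= hi ->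
  sumd M (fun m => ind lo hi (al + INR m * h)) <= (hi - lo) / h + 1.
Proof.
  intros. pose proof (count_grid al h lo hi M H H0).
  assert (Rmax 0 (Rmin hi (al + (INR M - 1) * h) - lo + h) <= hi - lo + h).
  { apply Rmax_lub; [lra|]. pose proof (Rmin_l hi (al + (INR M - 1) * h)). lra. }
  apply Rmult_le_reg_l with h; auto. replace (h * ((hi - lo) / h + 1)) with (hi - lo + h) by (field; lra). lra.
Qed.

Lemma sumd_lsum_swap : forall A M (F : nat -> A -> R) L,
  sumd M (fun m => lsum (F m) L) = lsum (fun x => sumd M (fun m => F m x)) L.
Proof.
  intros A M F L. induction L; simpl.
  - apply sumd_zero; auto.
  - rewrite sumd_plus. rewrite IHL. reflexivity.
Qed.

Lemma cover_1d : forall (A : Type) (L : list A) (w lo hi : A -> R) al be c,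
  al <= be -> (forall x, In x L -> 0 <= w x) -> (forall x, In x L -> lo x <= hi x) ->
  (forall t, al <= t <= be -> c <= lsum (fun x => w x * ind (lo x) (hi x) t) L) ->
  c * (be - al) <= lsum (fun x => w x * (hi x - lo x)) L.
Proof.
  intros A L w lo hi al be c Hab Hw Hlh Hc.
  assert (Hnn : 0 <= lsum (fun x => w x * (hi x - lo x)) L).
  { apply lsum_nonneg. intros x Hx. specialize (Hw x Hx). specialize (Hlh x Hx). nra. }
  destruct (Req_dec al be) as [<-|Hne]. { rewrite Rminus_diag, Rmult_0_r. auto. }
  set (W := lsum w L).
  assert (HW : 0 <= W) by (apply lsum_nonneg; auto).
  assert (Hgrid : forall M : nat, (0 < M)%nat ->
     c * (be - al) <= lsum (fun x => w x * (hi x - lo x)) L + (be - al) / INR M * W).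
  { intros M HM. set (h := (be - al) / INR M).
    assert (HMp : 0 < INR M) by (apply lt_0_INR; lia).
    assert (Hh : 0 < h) by (unfold h; apply Rdiv_lt_0_compat; lra).
    assert (Hpts : forall m, (m < M)%nat -> al <= al + INR m * h <= be).
    { intros m Hm. split.
      - pose proof (pos_INR m). nra.
      - assert (INR m <= INR M) by (apply le_INR; lia).
        assert (INR m * h <= INR M * h) by (apply Rmult_le_compat_r; lra).
        unfold h in H0 at 2. replace (INR M * ((be - al) / INR M)) with (be - al) in H0 by (field; lra). lra. }
    assert (H1 : INR M * c <= lsum (fun x => w x * sumd M (fun m => ind (lo x) (hi x) (al + INR m * h))) L).
    { rewrite <- sumd_const.
      eapply Rle_trans; [apply (sumd_le M _ (fun m => lsum (fun x => w x * ind (lo x) (hi x) (al + INR m * h)) L))|].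
      { intros m Hm. apply Hc. apply Hpts; auto. }
      rewrite sumd_lsum_swap. right. apply lsum_ext_in. intros x _. rewrite sumd_scal. reflexivity. }
    assert (H2 : lsum (fun x => w x * sumd M (fun m => ind (lo x) (hi x) (al + INR m * h))) L <=
                 lsum (fun x => w x * ((hi x - lo x) / h + 1)) L).
    { apply lsum_le. intros x Hx. apply Rmult_le_compat_l; auto. apply count_grid'; auto. }
    assert (E : lsum (fun x => w x * ((hi x - lo x) / h + 1)) L =
                / h * lsum (fun x => w x * (hi x - lo x)) L + W).
    { unfold W. rewrite <- lsum_scal, <- lsum_plus. apply lsum_ext_in. intros x _. field. lra. }
    rewrite E in H2. assert (INR M * c <= / h * lsum (fun x => w x * (hi x - lo x)) L + W) by lra.
    apply Rmult_le_compat_l with (r := h) in H; [|lra].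
    replace (h * (INR M * c)) with (c * (be - al)) in H by (unfold h; field; lra).
    replace (h * (/ h * lsum (fun x => w x * (hi x - lo x)) L + W)) with
      (lsum (fun x => w x * (hi x - lo x)) L + h * W) in H by (field; lra).
    exact H. }
  apply Rnot_lt_le; intro Hlt.
  set (gap := c * (be - al) - lsum (fun x => w x * (hi x - lo x)) L).
  assert (Hgap : 0 < gap) by (unfold gap; lra).
  destruct (INR_archimed gap ((be - al) * W + 1) Hgap) as [M HM].
  assert (HM0 : (0 < M)%nat).
  { destruct M; [simpl in HM; pose proof (Rle_refl 0); assert ((be - al) * W >= 0) by (apply Rle_ge; apply Rmult_le_pos; lra); lra| lia]. }
  specialize (Hgrid M HM0).
  assert (HMp : 0 < INR M) by (apply lt_0_INR; lia).
  assert ((be - al) / INR M * W < gap).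
  { apply Rmult_lt_reg_l with (INR M); auto.
    replace (INR M * ((be - al) / INR M * W)) with ((be - al) * W) by (field; lra). lra. }
  unfold gap in *. lra.
Qed.

Lemma lsum_term : forall A (f : A -> R) L x, In x L -> (forall y, In y L -> 0 <= f y) -> f x <= lsum f L.
Proof. intros A f L. induction L; simpl; intros x Hx H; [destruct Hx|].
  destruct Hx as [<-|Hx].
  - assert (0 <= lsum f L) by (apply lsum_nonneg; auto). lra.
  - assert (f x <= lsum f L) by (apply IHL; auto). assert (0 <= f a) by auto. lra. Qed.

Lemma lsum_filter_ind : forall A (f : A -> R) (P : A -> Prop) L,
  lsum f (filter (fun x => decb (P x)) L) = lsum (fun x => f x * (if excluded_middle_informative (P x) then 1 else 0)) L.
Proof. intros. induction L; simpl; auto. unfold decb at 1.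
  destruct (excluded_middle_informative (P a)); simpl; rewrite IHL; ring. Qed.

Lemma fin_cover : forall n (L : list ((nat -> R) * (nat -> R))) a b,
  (forall i, (i < n)%nat -> a i <= b i) ->
  (forall bx, In bx L -> forall i, (i < n)%nat -> fst bx i <= snd bx i) ->
  (forall z, (forall i, (i < n)%nat -> a i <= z i <= b i) -> exists bx, In bx L /\ forall i, (i < n)%nat -> fst bx i <= z i <= snd bx i) ->
  prodd n (fun i => b i - a i) <= lsum (fun bx => prodd n (fun i => snd bx i - fst bx i)) L.
Proof.
  induction n; intros L a b Hab Hbx Hcov.
  - destruct (Hcov (fun _ => 0)) as [bx [Hin _]]; [intros; lia|].
    eapply Rle_trans; [|apply (lsum_term _ _ L bx Hin)]. unfold prodd; simpl; lra.
    intros; unfold prodd; simpl; lra.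
  - rewrite prodd_S.
    rewrite (lsum_ext_in _ _ (fun bx => prodd n (fun i => snd bx i - fst bx i) * (snd bx n - fst bx n)))
      by (intros; apply prodd_S).
    apply (cover_1d _ L (fun bx => prodd n (fun i => snd bx i - fst bx i)) (fun bx => fst bx n) (fun bx => snd bx n)).
    + apply Hab; lia.
    + intros bx Hin. apply prodd_nonneg. intros i Hi. specialize (Hbx bx Hin i ltac:(lia)). lra.
    + intros bx Hin. apply Hbx; auto.
    + intros t Ht.
      replace (lsum (fun x => prodd n (fun i => snd x i - fst x i) * ind (fst x n) (snd x n) t) L)
        with (lsum (fun x => prodd n (fun i => snd x i - fst x i)) (filter (fun x => decb (fst x n <= t <= snd x n)) L)).
      2: { rewrite lsum_filter_ind. apply lsum_ext_in. intros x _. unfold ind. reflexivity. }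
      apply IHn.
      * intros i Hi. apply Hab; lia.
      * intros bx Hin i Hi. apply filter_In in Hin. apply Hbx; [tauto| lia].
      * intros z Hz. destruct (Hcov (upd z n t)) as [bx [Hin Hc]].
        { intros i Hi. unfold upd. destruct (Nat.eqb_spec i n) as [->|Hne]; auto. apply Hz; lia. }
        exists bx. split.
        -- apply filter_In. split; auto. unfold decb. destruct (excluded_middle_informative (fst bx n <= t <= snd bx n)) as [|Hn]; auto.
           exfalso. apply Hn. specialize (Hc n ltac:(lia)). unfold upd in Hc. rewrite Nat.eqb_refl in Hc. auto.
        -- intros i Hi. specialize (Hc i ltac:(lia)). unfold upd in Hc. destruct (Nat.eqb_spec i n); [lia|auto].
Qed.


Lemma lsum_app : forall A (f : A -> R) L1 L2, lsum f (L1 ++ L2) = lsum f L1 + lsum f L2.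
Proof. intros. induction L1; simpl; [ring|]. rewrite IHL1. ring. Qed.

Lemma lsum_map_seq : forall A (F : A -> R) (G : nat -> A) K,
  lsum F (map G (seq 0 (S K))) = sum_f_R0 (fun k => F (G k)) K.
Proof.
  intros A F G K. induction K.
  - simpl. ring.
  - rewrite seq_S', map_app, lsum_app, IHK, tech5. simpl. ring.
Qed.

Lemma prodd_pos : forall n f, (forall i, (i < n)%nat -> 0 < f i) -> 0 < prodd n f.
Proof. induction n; intros f H; [unfold prodd; simpl; lra|]. rewrite prodd_S.
  apply Rmult_lt_0_compat; [apply IHn; intros; apply H; lia| apply H; lia]. Qed.

Lemma prodd_enlarge : forall n (l : nat -> R) e, 0 < e ->
  exists eta, 0 < eta /\ prodd n (fun i => l i + 2 * eta) <= prodd n l + e.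
Proof.
  intros n l e He.
  assert (Hm : mono_near (fun del (x : R) => 0 < x < del)) by (intros a b x Ha Hab Hx; lra).
  assert (Hc : forall n, ctn (fun del (x : R) => 0 < x < del) (fun eta => prodd n (fun i => l i + 2 * eta)) (prodd n l)).
  { induction n0.
    - unfold prodd; simpl. apply ctn_const.
    - apply (ctn_ext _ _ (fun eta => prodd n0 (fun i => l i + 2 * eta) * (l n0 + 2 * eta))).
      { intros; rewrite prodd_S; auto. }
      rewrite prodd_S. apply ctn_mult; auto.
      assert (Hid : ctn (fun del (x : R) => 0 < x < del) (fun x => x) 0).
      { intros eps Heps. exists eps. split; auto. intros x Hx. rewrite Rminus_0_r, Rabs_pos_eq; lra. }
      assert (Hlin : ctn (fun del (x : R) => 0 < x < del) (fun eta => l n0 + 2 * eta) (l n0 + 2 * 0)).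
      { apply ctn_plus; auto. apply ctn_const. apply ctn_mult; auto. apply ctn_const. }
      replace (l n0 + 2 * 0) with (l n0) in Hlin by ring. exact Hlin. }
  destruct (Hc n e He) as [del [Hdel H]]. exists (del / 2). split; [lra|].
  specialize (H (del/2) ltac:(lra)). apply Rabs_def2 in H. lra.
Qed.

Lemma Un_cv_bounds : forall u l lo hi, Un_cv u l -> (forall n, lo <= u n <= hi) -> lo <= l <= hi.
Proof.
  intros u l lo hi Hu Hb. split; apply Rnot_lt_le; intro Hlt.
  - destruct (Hu (lo - l) ltac:(lra)) as [N HN]. specialize (HN N (le_n _)). specialize (Hb N).
    unfold R_dist in HN. apply Rabs_def2 in HN. lra.
  - destruct (Hu (l - hi) ltac:(lra)) as [N HN]. specialize (HN N (le_n _)). specialize (Hb N).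
    unfold R_dist in HN. apply Rabs_def2 in HN. lra.
Qed.

Lemma box_not_null : forall n (c : nat -> R) rho, 0 < rho ->
  ~ null n (fun z => forall i, (i < n)%nat -> c i - rho <= z i <= c i + rho).
Proof.
  intros n c rho Hrho Hnull.
  set (vol := prodd n (fun _ => 2 * rho)).
  assert (Hvol : 0 < vol) by (apply prodd_pos; intros; lra).
  destruct (Hnull (vol / 4) ltac:(lra)) as [lo [hi [H1 [H2 H3]]]].
  assert (Heta : forall k, exists eta, 0 < eta /\
     prodd n (fun i => (hi k i - lo k i) + 2 * eta) <= prodd n (fun i => hi k i - lo k i) + (vol / 4) / 2 ^ (S k)).
  { intros k. apply prodd_enlarge. apply Rdiv_lt_0_compat; [lra| apply pow_lt; lra]. }
  set (eta := fun k => proj1_sig (constructive_indefinite_description _ (Heta k))).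
  assert (Heta' : forall k, 0 < eta k /\
     prodd n (fun i => (hi k i - lo k i) + 2 * eta k) <= prodd n (fun i => hi k i - lo k i) + (vol / 4) / 2 ^ (S k)).
  { intros k. unfold eta. destruct (constructive_indefinite_description _ (Heta k)); auto. }
  set (inO := fun k (z : nat -> R) => forall i, (i < n)%nat -> lo k i - eta k < z i < hi k i + eta k).
  set (cube := fun z : nat -> R => forall i, (i < n)%nat -> c i - rho <= z i <= c i + rho).
  assert (Hfin : exists K, forall z, cube z -> exists k, (k <= K)%nat /\ inO k z).
  { apply NNPP; intro Hn.
    assert (Hs : forall K, exists z, cube z /\ forall k, (k <= K)%nat -> ~ inO k z).
    { intros K. apply NNPP; intro Hn2. apply Hn. exists K. intros z Hz. apply NNPP; intro Hn3.
      apply Hn2. exists z. split; auto. intros k Hk Hin. apply Hn3. exists k; auto. }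
    set (zs := fun K => proj1_sig (constructive_indefinite_description _ (Hs K))).
    assert (Hzs : forall K, cube (zs K) /\ forall k, (k <= K)%nat -> ~ inO k (zs K)).
    { intros K. unfold zs. destruct (constructive_indefinite_description _ (Hs K)); auto. }
    destruct (subseq_kd n zs (sumd n (fun i => Rabs (c i)) + rho)) as [phi [Hphi Hcv]].
    { intros K i Hi. destruct (Hzs K) as [Hc _]. specialize (Hc i Hi).
      assert (Rabs (c i) <= sumd n (fun i => Rabs (c i))) by (apply (sumd_term_le n (fun i => Rabs (c i))); auto; intros; apply Rabs_pos).
      replace (zs K i) with (c i + (zs K i - c i)) by ring. eapply Rle_trans; [apply Rabs_triang|].
      assert (Rabs (zs K i - c i) <= rho) by (apply Rabs_le; lra). lra. }
    assert (Hl : forall i, exists l, (i < n)%nat -> Un_cv (fun m => zs (phi m) i) l).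
    { intros i. destruct (Nat.lt_ge_cases i n) as [Hi|Hi].
      - destruct (Hcv i Hi) as [l Hl]. exists l; auto.
      - exists 0; intros; lia. }
    set (Z := fun i => proj1_sig (constructive_indefinite_description _ (Hl i))).
    assert (HZ : forall i, (i < n)%nat -> Un_cv (fun m => zs (phi m) i) (Z i)).
    { intros i Hi. unfold Z. destruct (constructive_indefinite_description _ (Hl i)); simpl; auto. }
    assert (HZc : cube Z).
    { intros i Hi. apply (Un_cv_bounds (fun m => zs (phi m) i)); auto. intros m. apply (proj1 (Hzs (phi m))); auto. }
    destruct (H2 Z HZc) as [k0 Hk0].
    destruct (max_N n (fun i m => Rabs (zs (phi m) i - Z i) < eta k0)) as [N0 HN0].
    { intros i Hi. destruct (HZ i Hi (eta k0) (proj1 (Heta' k0))) as [N HN]. exists N. intros m Hm. apply HN; auto. }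
    set (m := max N0 k0).
    destruct (Hzs (phi m)) as [_ Hnot]. apply (Hnot k0).
    { pose proof (sincr_ge phi Hphi m). lia. }
    intros i Hi. specialize (HN0 i Hi m ltac:(lia)). specialize (Hk0 i Hi). apply Rabs_def2 in HN0. lra. }
  destruct Hfin as [K HK].
  set (L := map (fun k => ((fun i => lo k i - eta k), (fun i => hi k i + eta k))) (seq 0 (S K))).
  assert (Hcov := fin_cover n L (fun i => c i - rho) (fun i => c i + rho)).
  assert (Hle : prodd n (fun i => (c i + rho) - (c i - rho)) <= lsum (fun bx => prodd n (fun i => snd bx i - fst bx i)) L).
  { apply Hcov.
    - intros; lra.
    - intros bx Hin i Hi. unfold L in Hin. apply in_map_iff in Hin. destruct Hin as [k [<- _]]. simpl.
      specialize (H1 k i). pose proof (proj1 (Heta' k)). lra.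
    - intros z Hz. destruct (HK z Hz) as [k [Hk Hin]].
      exists ((fun i => lo k i - eta k), (fun i => hi k i + eta k)). split.
      + unfold L. apply in_map_iff. exists k. split; auto. apply in_seq. lia.
      + intros i Hi. simpl. specialize (Hin i Hi). lra. }
  unfold L in Hle. rewrite lsum_map_seq in Hle. simpl in Hle.
  rewrite (prodd_ext n _ (fun _ => 2 * rho)) in Hle by (intros; ring). fold vol in Hle.
  assert (Hs : sum_f_R0 (fun k => prodd n (fun i => hi k i + eta k - (lo k i - eta k))) K <=
               sum_f_R0 (fun k => prodd n (fun i => hi k i - lo k i)) K + (vol / 4) * sum_f_R0 (fun k => / 2 ^ S k) K).
  { rewrite scal_sum, <- plus_sum. apply sum_f_R0_le. intros k _.
    rewrite (prodd_ext n _ (fun i => (hi k i - lo k i) + 2 * eta k)) by (intros; ring).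
    pose proof (proj2 (Heta' k)). unfold Rdiv in *. lra. }
  rewrite geom_sum in Hs. specialize (H3 K).
  assert (0 < / 2 ^ S K) by (apply Rinv_0_lt_compat, pow_lt; lra).
  nra.
Qed.


Lemma ctn_minus : forall X (near : R -> X -> Prop) f g a b, mono_near near ->
  ctn near f a -> ctn near g b -> ctn near (fun x => f x - g x) (a - b).
Proof. intros. apply (ctn_plus X near f (fun x => - g x) a (- b)); auto. apply ctn_opp; auto. Qed.

Definition near2 d T Om (t : R) (x : nat -> R) : R -> R * (nat -> R) -> Prop :=
  fun del p => cQ d T Om (fst p) (snd p) /\ Rabs (fst p - t) + normd d (vsub (snd p) x) < del.

Lemma near2_mono : forall d T Om t x, mono_near (near2 d T Om t x).
Proof. intros d T Om t x a b p Ha Hab [H1 H2]. split; auto. lra. Qed.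

Lemma cont2_ctn : forall d T Om f, cont2_on d (cQ d T Om) f ->
  forall t x, cQ d T Om t x -> ctn (near2 d T Om t x) (fun p => f (fst p) (snd p)) (f t x).
Proof. intros d T Om f Hf t x Hc eps He. destruct (Hf t x Hc eps He) as [del [Hdel H]].
  exists del. split; auto. intros [t' x'] [H1 H2]. simpl in *. apply H; auto. Qed.

Lemma ctn_cont2 : forall d T Om f, (forall t x, cQ d T Om t x -> ctn (near2 d T Om t x) (fun p => f (fst p) (snd p)) (f t x)) ->
  cont2_on d (cQ d T Om) f.
Proof. intros d T Om f H t x Hc eps He. destruct (H t x Hc eps He) as [del [Hdel H']].
  exists del. split; auto. intros t' x' Hc' Hn. apply (H' (t', x')). split; auto. Qed.

Lemma cont3_slice : forall d T Om r0 f r, r0 <= r -> cont3_on d (cQR d T Om r0) f ->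
  cont2_on d (cQ d T Om) (fun t x => f t x r).
Proof. intros d T Om r0 f r Hr Hf t x Hc eps He. destruct (Hf t x r (conj Hc Hr) eps He) as [del [Hdel H]].
  exists del. split; auto. intros t' x' Hc' Hn. apply H; [split; auto|]. rewrite Rminus_diag, Rabs_R0. lra. Qed.

Lemma cont2_res : forall d T Om (w0 : R -> (nat -> R) -> R) (w1 v : nat -> R -> (nat -> R) -> R)
  (w2 : nat -> R -> (nat -> R) -> R) a,
  cont2_on d (cQ d T Om) w0 -> (forall i, (i < d)%nat -> cont2_on d (cQ d T Om) (v i)) ->
  (forall i, (i < d)%nat -> cont2_on d (cQ d T Om) (w1 i)) -> (forall i, (i < d)%nat -> cont2_on d (cQ d T Om) (w2 i)) ->
  cont2_on d (cQ d T Om) (fun t x => w0 t x + sumd d (fun i => v i t x * w1 i t x) - a * sumd d (fun i => w2 i t x)).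
Proof.
  intros d T Om w0 w1 v w2 a H0 Hv H1 H2. apply ctn_cont2. intros t x Hc.
  pose proof (near2_mono d T Om t x) as Hm.
  apply ctn_minus; [exact Hm| |].
  - apply ctn_plus; [exact Hm| apply (cont2_ctn d T Om w0); auto|].
    apply (ctn_sumd _ _ d (fun i p => v i (fst p) (snd p) * w1 i (fst p) (snd p))); [exact Hm|].
    intros i Hi. apply ctn_mult; [exact Hm| apply (cont2_ctn d T Om (v i)); auto| apply (cont2_ctn d T Om (w1 i)); auto].
  - apply ctn_mult; [exact Hm| apply ctn_const|].
    apply (ctn_sumd _ _ d (fun i p => w2 i (fst p) (snd p))); [exact Hm|]. intros i Hi. apply (cont2_ctn d T Om (w2 i)); auto.
Qed.

Lemma null_mono : forall n (S S' : (nat -> R) -> Prop), null n S -> (forall z, S' z -> S z) -> null n S'.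
Proof. intros n S S' H Hs eps He. destruct (H eps He) as [lo [hi [H1 [H2 H3]]]].
  exists lo, hi. split; [exact H1|]. split; [|exact H3]. intros z Hz. apply H2; auto. Qed.

Lemma null_none : forall n (S : (nat -> R) -> Prop), (0 < n)%nat -> (forall z, ~ S z) -> null n S.
Proof.
  intros n S Hn HS eps He. exists (fun _ _ => 0), (fun _ _ => 0). split; [intros; lra|]. split; [intros z Hz; exfalso; eapply HS; eauto|].
  intros K. rewrite sum_f_R0_zero; [lra|]. intros k. destruct n; [lia|]. rewrite prodd_S. ring.
Qed.

Lemma ae_contra : forall n (E : (nat -> R) -> Prop) (z0 : nat -> R) rho, 0 < rho ->
  (forall z, (forall i, (i < n)%nat -> z0 i - rho <= z i <= z0 i + rho) -> E z) -> ~ null n E.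
Proof. intros n E z0 rho Hr H Hn. apply (box_not_null n z0 rho Hr). eapply null_mono; eauto. Qed.

Lemma deriv_locally_zero : forall f x l, derivable_pt_lim f x l ->
  (exists eta, 0 < eta /\ forall s, Rabs (s - x) < eta -> f s = 0) -> l = 0.
Proof.
  intros f x l Hd [eta [Heta Hz]]. apply NNPP; intro Hl.
  assert (Hpos : 0 < Rabs l) by (apply Rabs_pos_lt; auto).
  destruct (Hd (Rabs l) Hpos) as [del Hdel].
  set (h := Rmin (del / 2) (eta / 2)).
  assert (Hh : 0 < h) by (unfold h; apply Rmin_pos; pose proof (cond_pos del); lra).
  assert (h <= del / 2) by apply Rmin_l. assert (h <= eta / 2) by apply Rmin_r. pose proof (cond_pos del).
  specialize (Hdel h ltac:(lra) ltac:(rewrite Rabs_pos_eq; lra)).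
  rewrite (Hz (x + h)), (Hz x) in Hdel.
  - replace ((0 - 0) / h - l) with (- l) in Hdel by (field; lra). rewrite Rabs_Ropp in Hdel. lra.
  - rewrite Rminus_diag, Rabs_R0; lra.
  - replace (x + h - x) with h by ring. rewrite Rabs_pos_eq; lra.
Qed.


Lemma contpt_eps : forall f x, continuity_pt f x -> forall eps, 0 < eps -> exists del, 0 < del /\
  forall y, Rabs (y - x) < del -> Rabs (f y - f x) < eps.
Proof.
  intros f x H eps He. unfold continuity_pt, continue_in, limit1_in, limit_in in H.
  destruct (H eps He) as [del [Hdel Hd]]. exists del. split; auto. intros y Hy.
  destruct (Req_dec y x) as [->|Hne]. { rewrite Rminus_diag, Rabs_R0; auto. }
  apply (Hd y). split; [split; [exact I| auto]| exact Hy].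
Qed.

Lemma vecv_inRd : forall d v t x, inRd d (vecv d v t x).
Proof. intros d v t x i Hi. unfold vecv. destruct (Nat.ltb_spec i d); [lia|auto]. Qed.

Lemma symgrad_inRdd : forall d vx t x, inRdd d (symgrad d vx t x).
Proof. intros d vx t x i j Hij. unfold symgrad. destruct (Nat.ltb_spec i d); destruct (Nat.ltb_spec j d); simpl; auto; lia. Qed.

Lemma pos_nonneg : forall s, 0 <= pos s.
Proof. intros. unfold pos. apply Rmax_r. Qed.

Lemma integrand_nonneg : forall d r0 K (beta : R -> (nat -> R) -> (nat -> nat -> R) -> R) eta v vx (psi : R -> (nat -> R) -> R -> R) t x r rt,
  0 < r0 -> hypA3 d r0 K beta eta ->
  0 <= beta rt (vecv d v t x) (symgrad d vx t x) * kappa r0 r rt * pos (psi t x rt).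
Proof.
  intros d r0 K beta eta v vx psi t x r rt Hr0 HA3. destruct HA3 as [_ [_ [Hb _]]].
  unfold kappa. destruct (Rlt_dec r0 rt) as [H1|H1]; [|rewrite Rmult_0_r, Rmult_0_l; lra].
  destruct (Rlt_dec 0 r) as [H2|H2]; [|rewrite Rmult_0_r, Rmult_0_l; lra].
  destruct (Rlt_dec r rt) as [H3|H3]; [|rewrite Rmult_0_r, Rmult_0_l; lra].
  apply Rmult_le_pos; [|apply pos_nonneg]. apply Rmult_le_pos.
  - apply Rlt_le, Hb; auto. apply vecv_inRd. apply symgrad_inRdd.
  - apply Rlt_le, Rinv_0_lt_compat. lra.
Qed.

Lemma Iint_nonneg : forall d r0 K beta eta v vx (psi : R -> (nat -> R) -> R -> R) t x r I,
  0 < r0 -> hypA3 d r0 K beta eta ->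
  HKint_inf (fun rt => beta rt (vecv d v t x) (symgrad d vx t x) * kappa r0 r rt * pos (psi t x rt)) r I -> 0 <= I.
Proof.
  intros. apply (HKinf_nonneg_ae _ r I (fun _ => False) H1 null_empty1).
  intros; eapply integrand_nonneg; eauto.
Qed.

Definition zpt (d : nat) (t : R) (x : nat -> R) (r : R) : nat -> R :=
  fun i => match i with O => t | S j => if Nat.ltb j d then x j else if Nat.eqb j d then r else 0 end.

Lemma cube_coords : forall d t x r z rb, inRd d x -> 0 <= rb ->
  (forall i, (i < S (S d))%nat -> zpt d t x r i - rb <= z i <= zpt d t x r i + rb) ->
  Rabs (z O - t) <= rb /\ Rabs (z (S d) - r) <= rb /\ normd d (vsub (zx d z) x) <= INR d * rb /\ inRd d (zx d z).
Proof.
  intros d t x r z rb Hx Hrb H. split; [|split; [|split]].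
  - specialize (H O ltac:(lia)). simpl in H. apply Rabs_le; lra.
  - specialize (H (S d) ltac:(lia)). simpl in H. rewrite Nat.ltb_irrefl, Nat.eqb_refl in H. apply Rabs_le; lra.
  - eapply Rle_trans; [apply normd_le_sum|]. rewrite <- sumd_const. apply sumd_le. intros j Hj.
    unfold vsub, zx. destruct (Nat.ltb_spec j d); [|lia]. specialize (H (S j) ltac:(lia)). simpl in H.
    destruct (Nat.ltb_spec j d); [|lia]. apply Rabs_le; lra.
  - intros j Hj. unfold zx. destruct (Nat.ltb_spec j d); [lia|auto].
Qed.


Lemma Rabs_def2b : forall x a, Rabs x <= a -> - a <= x <= a.
Proof. intros x a H. pose proof (Rle_abs x). pose proof (Rabs_Ropp x). pose proof (Rle_abs (- x)). lra. Qed.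

Definition near3 d T Om r0 t x r : R -> R * (nat -> R) * R -> Prop :=
  fun del p => cQR d T Om r0 (fst (fst p)) (snd (fst p)) (snd p) /\
    Rabs (fst (fst p) - t) + normd d (vsub (snd (fst p)) x) + Rabs (snd p - r) < del.

Lemma near3_mono : forall d T Om r0 t x r, mono_near (near3 d T Om r0 t x r).
Proof. intros d T Om r0 t x r a b p Ha Hab [H1 H2]. split; auto. lra. Qed.

Lemma cont3_ctn : forall d T Om r0 f t x r, cont3_on d (cQR d T Om r0) f -> cQR d T Om r0 t x r ->
  ctn (near3 d T Om r0 t x r) (fun p => f (fst (fst p)) (snd (fst p)) (snd p)) (f t x r).
Proof. intros d T Om r0 f t x r Hf Hc eps He. destruct (Hf t x r Hc eps He) as [del [Hdel H]].
  exists del. split; auto. intros [[t' x'] r'] [H1 H2]. simpl in *. apply H; auto. Qed.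

Lemma cont2_ctn3 : forall d T Om r0 f t x r, cont2_on d (cQ d T Om) f -> cQR d T Om r0 t x r ->
  ctn (near3 d T Om r0 t x r) (fun p => f (fst (fst p)) (snd (fst p))) (f t x).
Proof. intros d T Om r0 f t x r Hf [Hc _] eps He. destruct (Hf t x Hc eps He) as [del [Hdel H]].
  exists del. split; auto. intros [[t' x'] r'] [[H1 _] H2]. simpl in *. apply H; auto.
  pose proof (Rabs_pos (r' - r)). lra. Qed.

Lemma contA_ctn3 : forall d T Om r0 (A : R -> R) t x r, continuity_pt A r ->
  ctn (near3 d T Om r0 t x r) (fun p => A (snd p)) (A r).
Proof. intros d T Om r0 A t x r HA eps He. destruct (contpt_eps A r HA eps He) as [del [Hdel H]].
  exists del. split; auto. intros [[t' x'] r'] [_ H2]. simpl in *. apply H.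
  pose proof (Rabs_pos (t' - t)). pose proof (normd_nonneg d (vsub x' x)). lra. Qed.

Lemma psi_res : forall d T r0 K (Om : (nat -> R) -> Prop) (A tau eta : R -> R)
  (beta : R -> (nat -> R) -> (nat -> nat -> R) -> R)
  (v vt : nat -> R -> (nat -> R) -> R) (vx : nat -> nat -> R -> (nat -> R) -> R)
  (psi psit psir : R -> (nat -> R) -> R -> R)
  (psix : nat -> R -> (nat -> R) -> R -> R)
  (psixx : nat -> nat -> R -> (nat -> R) -> R -> R)
  (phi : R -> (nat -> R) -> R),
  0 < T -> 0 < r0 -> bounded_domain d Om -> hypA1 r0 A -> hypA3 d r0 K beta eta ->
  reg_v d T Om v vt vx -> reg_psi d T Om r0 psi psit psir psix psixx ->
  ae_txr d (oQR T Om r0) (fun t x r =>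
      exists l I,
        derivable_pt_lim (fun s => pos (psi t x s)) r l /\
        HKint_inf (fun rt => beta rt (vecv d v t x) (symgrad d vx t x)
                              * kappa r0 r rt * pos (psi t x rt)) r I /\
        psit t x r + sumd d (fun i => v i t x * psix i t x r)
          - A r * sumd d (fun i => psixx i i t x r)
        = - beta r (vecv d v t x) (symgrad d vx t x) * psi t x r
          - tau r * phi t x * l + 2 * I) ->
  forall r t x, r0 < r -> oQ T Om t x -> psi t x r < 0 ->
  0 <= psit t x r + sumd d (fun i => v i t x * psix i t x r) - A r * sumd d (fun i => psixx i i t x r).
Proof.
  intros d T r0 K Om A tau eta beta v vt vx psi psit psir psix psixx phi HT Hr0 HOm HA1 HA3 Hv Hpsi Heq
    r t x Hr Hox Hneg.
  apply Rnot_lt_le; intro HR.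
  destruct Hpsi as [[Cpsi [Cpsit [Cpsir [Cpsix Cpsixx]]]] _].
  destruct Hv as [Hvc _].
  assert (Hc3 : cQR d T Om r0 t x r).
  { destruct Hox as [Ht Hx]. split; [split; [lra| apply Om_closure; auto; apply bd_open; auto]| lra]. }
  pose proof (near3_mono d T Om r0 t x r) as Hm.
  set (Rf := fun t' x' r' => psit t' x' r' + sumd d (fun i => v i t' x' * psix i t' x' r') - A r' * sumd d (fun i => psixx i i t' x' r')).
  assert (HRc : ctn (near3 d T Om r0 t x r) (fun p => Rf (fst (fst p)) (snd (fst p)) (snd p)) (Rf t x r)).
  { unfold Rf. apply ctn_minus; [exact Hm| |].
    - apply ctn_plus; [exact Hm| apply (cont3_ctn d T Om r0 psit); auto|].
      apply (ctn_sumd _ _ d (fun i p => v i (fst (fst p)) (snd (fst p)) * psix i (fst (fst p)) (snd (fst p)) (snd p))); [exact Hm|].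
      intros i Hi. apply ctn_mult; [exact Hm| apply (cont2_ctn3 d T Om r0 (v i)); auto; apply Hvc; auto|].
      apply (cont3_ctn d T Om r0 (psix i)); auto.
    - apply ctn_mult; [exact Hm| apply contA_ctn3; apply HA1; auto|].
      apply (ctn_sumd _ _ d (fun i p => psixx i i (fst (fst p)) (snd (fst p)) (snd p))); [exact Hm|].
      intros i Hi. apply (cont3_ctn d T Om r0 (psixx i i)); auto. }
  destruct (HRc (- Rf t x r / 2) ltac:(unfold Rf; lra)) as [d1 [Hd1 H1]].
  destruct (Cpsi t x r Hc3 (- psi t x r / 2) ltac:(lra)) as [d2 [Hd2 H2]].
  destruct Hox as [Ht HOx].
  destruct (proj2 (bd_open d Om HOm) x HOx) as [rx [Hrx Hball]].
  set (del := Rmin (Rmin d1 d2) (Rmin (Rmin t (T - t)) (Rmin rx (r - r0)))).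
  assert (Hdel : 0 < del).
  { unfold del. repeat apply Rmin_pos; lra. }
  assert (Hdl1 : del <= d1) by (unfold del; eapply Rle_trans; [apply Rmin_l| apply Rmin_l]).
  assert (Hdl2 : del <= d2) by (unfold del; eapply Rle_trans; [apply Rmin_l| apply Rmin_r]).
  assert (Hdl3 : del <= t) by (unfold del; eapply Rle_trans; [apply Rmin_r|]; eapply Rle_trans; [apply Rmin_l| apply Rmin_l]).
  assert (Hdl4 : del <= T - t) by (unfold del; eapply Rle_trans; [apply Rmin_r|]; eapply Rle_trans; [apply Rmin_l| apply Rmin_r]).
  assert (Hdl5 : del <= rx) by (unfold del; eapply Rle_trans; [apply Rmin_r|]; eapply Rle_trans; [apply Rmin_r| apply Rmin_l]).
  assert (Hdl6 : del <= r - r0) by (unfold del; eapply Rle_trans; [apply Rmin_r|]; eapply Rle_trans; [apply Rmin_r| apply Rmin_r]).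
  assert (HdI : 0 < INR d + 3) by (pose proof (pos_INR d); lra).
  set (rb := del / (2 * (INR d + 3))).
  assert (Hrb : 0 < rb) by (unfold rb; apply Rdiv_lt_0_compat; lra).
  assert (Hrb2 : (INR d + 2) * rb < del / 2).
  { unfold rb. apply Rmult_lt_reg_r with (2 * (INR d + 3)); [lra|].
    field_simplify; [|lra]. nra. }
  refine (ae_contra (S (S d)) _ (zpt d t x r) rb Hrb _ Heq).
  intros z Hz.
  destruct (cube_coords d t x r z rb (proj1 HOm x HOx) (Rlt_le _ _ Hrb) Hz) as [Hzt [Hzr [Hzx Hzin]]].
  set (t' := z O). set (x' := zx d z). set (r' := z (S d)). fold t' x' r' in Hzt, Hzr, Hzx, Hzin.
  pose proof (pos_INR d) as HdP.
  assert (Hdist : Rabs (t' - t) + normd d (vsub x' x) + Rabs (r' - r) < del / 2).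
  { assert (INR d * rb + 2 * rb = (INR d + 2) * rb) by ring. lra. }
  assert (Hnx : normd d (vsub x' x) < rx).
  { pose proof (Rabs_pos (t' - t)). pose proof (Rabs_pos (r' - r)). lra. }
  assert (HOx' : Om x') by (apply Hball; auto).
  assert (Hrbd : rb < del / 2) by nra.
  assert (Ht' : 0 < t' < T).
  { apply Rabs_def2b in Hzt. lra. }
  assert (Hr' : r0 < r') by (apply Rabs_def2b in Hzr; lra).
  split.
  { split; [split; auto| auto]. }
  intros [l [I [Hl [HI Heqn]]]].
  assert (Hcl' : closure d Om x') by (apply Om_closure; auto; apply bd_open; auto).
  assert (Hl0 : l = 0).
  { apply (deriv_locally_zero _ r' l Hl). exists (del / 2). split; [lra|]. intros s Hs.
    assert (psi t' x' s < 0).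
    { assert (Hc : cQR d T Om r0 t' x' s).
      { split; [split; [lra|auto]|]. apply Rabs_def2 in Hs. apply Rabs_def2b in Hzr. lra. }
      specialize (H2 t' x' s Hc).
      assert (Rabs (s - r) <= Rabs (s - r') + Rabs (r' - r)).
      { replace (s - r) with ((s - r') + (r' - r)) by ring. apply Rabs_triang. }
      assert (Hd3 : Rabs (t' - t) + normd d (vsub x' x) + Rabs (s - r) < d2) by lra.
      specialize (H2 Hd3). apply Rabs_def2 in H2. lra. }
    unfold pos. apply Rmax_right. lra. }
  assert (HI0 : 0 <= I) by (apply (Iint_nonneg d r0 K beta eta v vx psi t' x' r' I Hr0 HA3 HI)).
  assert (Hb : 0 < beta r' (vecv d v t' x') (symgrad d vx t' x')).
  { destruct HA3 as [_ [_ [Hb _]]]. apply Hb; auto. apply vecv_inRd. apply symgrad_inRdd. }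
  assert (Hpsi' : psi t' x' r' < 0).
  { assert (Hc : cQR d T Om r0 t' x' r') by (split; [split; [lra|auto]| lra]).
    specialize (H2 t' x' r' Hc ltac:(lra)). apply Rabs_def2 in H2. lra. }
  assert (HRf : Rf t' x' r' < 0).
  { assert (Hc : cQR d T Om r0 t' x' r') by (split; [split; [lra|auto]| lra]).
    assert (Hn3 : near3 d T Om r0 t x r d1 (t', x', r')) by (split; [exact Hc| simpl; lra]).
    specialize (H1 (t', x', r') Hn3). simpl in H1. apply Rabs_def2 in H1. lra. }
  unfold Rf in HRf. rewrite Heqn, Hl0 in HRf.
  assert (0 < - beta r' (vecv d v t' x') (symgrad d vx t' x') * psi t' x' r') by nra.
  lra.
Qed.


Definition zpt2 (d : nat) (t : R) (x : nat -> R) : nat -> R :=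
  fun i => match i with O => t | S j => if Nat.ltb j d then x j else 0 end.

Lemma cube_coords2 : forall d t x z rb, inRd d x -> 0 <= rb ->
  (forall i, (i < S d)%nat -> zpt2 d t x i - rb <= z i <= zpt2 d t x i + rb) ->
  Rabs (z O - t) <= rb /\ normd d (vsub (zx d z) x) <= INR d * rb /\ inRd d (zx d z).
Proof.
  intros d t x z rb Hx Hrb H. split; [|split].
  - specialize (H O ltac:(lia)). simpl in H. apply Rabs_le; lra.
  - eapply Rle_trans; [apply normd_le_sum|]. rewrite <- sumd_const. apply sumd_le. intros j Hj.
    unfold vsub, zx. destruct (Nat.ltb_spec j d); [|lia]. specialize (H (S j) ltac:(lia)). simpl in H.
    destruct (Nat.ltb_spec j d); [|lia]. apply Rabs_le; lra.
  - intros j Hj. unfold zx. destruct (Nat.ltb_spec j d); [lia|auto].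
Qed.

Lemma phi_res : forall d T r0 K A0 (Om : (nat -> R) -> Prop) (tau taud eta : R -> R)
  (beta : R -> (nat -> R) -> (nat -> nat -> R) -> R)
  (v vt : nat -> R -> (nat -> R) -> R) (vx : nat -> nat -> R -> (nat -> R) -> R)
  (psi : R -> (nat -> R) -> R -> R)
  (phi phit : R -> (nat -> R) -> R)
  (phix : nat -> R -> (nat -> R) -> R)
  (phixx : nat -> nat -> R -> (nat -> R) -> R),
  0 < T -> 0 < r0 -> 0 < K -> bounded_domain d Om -> hypA2 r0 K tau taud -> hypA3 d r0 K beta eta ->
  reg_v d T Om v vt vx -> reg_phi d T Om phi phit phix phixx ->
  ae_tx d (oQ T Om) (fun t x =>
      exists I1 (J : R -> R) I2,
        HKint_inf (fun r => (tau r + r * taud r) * pos (psi t x r)) r0 I1 /\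
        (forall r, 0 < r < r0 ->
           HKint_inf (fun rt => beta rt (vecv d v t x) (symgrad d vx t x)
                                 * kappa r0 r rt * pos (psi t x rt)) r0 (J r)) /\
        HKint (fun r => r * J r) 0 r0 I2 /\
        phit t x + sumd d (fun i => v i t x * phix i t x)
          - A0 * sumd d (fun i => phixx i i t x)
        = - phi t x * I1 + 2 * I2) ->
  forall t x, oQ T Om t x -> phi t x < 0 ->
  0 <= phit t x + sumd d (fun i => v i t x * phix i t x) - A0 * sumd d (fun i => phixx i i t x).
Proof.
  intros d T r0 K A0 Om tau taud eta beta v vt vx psi phi phit phix phixx HT Hr0 HK HOm HA2 HA3 Hv Hphi Heq
    t x Hox Hneg.
  apply Rnot_lt_le; intro HR.
  destruct Hphi as [[Cphi [Cphit [Cphix Cphixx]]] _].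
  destruct Hv as [Hvc _].
  assert (Hc2 : cQ d T Om t x).
  { destruct Hox as [Ht Hx]. split; [lra| apply Om_closure; auto; apply bd_open; auto]. }
  set (Rf := fun t' x' => phit t' x' + sumd d (fun i => v i t' x' * phix i t' x') - A0 * sumd d (fun i => phixx i i t' x')).
  assert (HRc : cont2_on d (cQ d T Om) Rf).
  { unfold Rf. apply cont2_res; [auto| intros i Hi; apply Hvc; auto| auto| intros i Hi; apply Cphixx; auto]. }
  destruct (HRc t x Hc2 (- Rf t x / 2) ltac:(unfold Rf; lra)) as [d1 [Hd1 H1]].
  destruct (Cphi t x Hc2 (- phi t x / 2) ltac:(lra)) as [d2 [Hd2 H2]].
  destruct Hox as [Ht HOx].
  destruct (proj2 (bd_open d Om HOm) x HOx) as [rx [Hrx Hball]].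
  set (del := Rmin (Rmin d1 d2) (Rmin (Rmin t (T - t)) rx)).
  assert (Hdel : 0 < del) by (unfold del; repeat apply Rmin_pos; lra).
  assert (Hdl1 : del <= d1) by (unfold del; eapply Rle_trans; [apply Rmin_l| apply Rmin_l]).
  assert (Hdl2 : del <= d2) by (unfold del; eapply Rle_trans; [apply Rmin_l| apply Rmin_r]).
  assert (Hdl3 : del <= t) by (unfold del; eapply Rle_trans; [apply Rmin_r|]; eapply Rle_trans; [apply Rmin_l| apply Rmin_l]).
  assert (Hdl4 : del <= T - t) by (unfold del; eapply Rle_trans; [apply Rmin_r|]; eapply Rle_trans; [apply Rmin_l| apply Rmin_r]).
  assert (Hdl5 : del <= rx) by (unfold del; eapply Rle_trans; [apply Rmin_r| apply Rmin_r]).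
  assert (HdI : 0 < INR d + 3) by (pose proof (pos_INR d); lra).
  set (rb := del / (2 * (INR d + 3))).
  assert (Hrb : 0 < rb) by (unfold rb; apply Rdiv_lt_0_compat; lra).
  assert (Hrb2 : (INR d + 2) * rb < del / 2).
  { unfold rb. apply Rmult_lt_reg_r with (2 * (INR d + 3)); [lra|].
    field_simplify; [|lra]. nra. }
  pose proof (pos_INR d) as HdP.
  assert (Hrbd : rb < del / 2) by nra.
  refine (ae_contra (S d) _ (zpt2 d t x) rb Hrb _ Heq).
  intros z Hz.
  destruct (cube_coords2 d t x z rb (proj1 HOm x HOx) (Rlt_le _ _ Hrb) Hz) as [Hzt [Hzx Hzin]].
  set (t' := z O). set (x' := zx d z). fold t' x' in Hzt, Hzx, Hzin.
  assert (Hdist : Rabs (t' - t) + normd d (vsub x' x) < del / 2).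
  { assert (INR d * rb + rb <= (INR d + 2) * rb) by nra. lra. }
  assert (Hnx : normd d (vsub x' x) < rx) by (pose proof (Rabs_pos (t' - t)); lra).
  assert (HOx' : Om x') by (apply Hball; auto).
  assert (Ht' : 0 < t' < T) by (apply Rabs_def2b in Hzt; lra).
  split; [split; auto|].
  intros [I1 [J [I2 [HI1 [HJ [HI2 Heqn]]]]]].
  assert (Hcl' : closure d Om x') by (apply Om_closure; auto; apply bd_open; auto).
  destruct HA2 as [_ [_ [_ [_ [_ [_ Hae]]]]]].
  assert (HI10 : 0 <= I1).
  { set (Q := fun s => derivable_pt_lim tau s (taud s) /\ / K * r0 <= tau s + s * taud s /\
                 tau s + taud s + s * taud s + tau s / s <= K).
    apply (HKinf_nonneg_ae _ r0 I1 (fun s => (r0 < s /\ ~ Q s) \/ s = r0) HI1 (null_add_point (fun s => r0 < s /\ ~ Q s) r0 Hae)).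
    intros s Hs Hn. apply Rmult_le_pos; [|apply pos_nonneg].
    assert (Hs' : r0 < s) by (destruct (Req_dec s r0); [exfalso; apply Hn; right; auto| lra]).
    assert (Hq : Q s).
    { apply NNPP; intro Hq. apply Hn. left. split; auto. }
    destruct Hq as [_ [Hq _]]. assert (0 < / K * r0) by (apply Rmult_lt_0_compat; [apply Rinv_0_lt_compat|]; lra).
    lra. }
  assert (HI20 : 0 <= I2).
  { apply (HK_nonneg_ae _ 0 r0 I2 (fun s => False \/ s = r0) HI2 (null_add_point (fun _ => False) r0 null_empty1)).
    intros s Hs Hn. destruct (Req_dec s 0) as [->|Hs0]; [lra|].
    apply Rmult_le_pos; [lra|].
    assert (Hs2 : 0 < s < r0) by (split; [lra|]; destruct (Req_dec s r0); [exfalso; apply Hn; right; auto| lra]).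
    apply (HKinf_nonneg_ae _ r0 (J s) (fun _ => False) (HJ s Hs2) null_empty1).
    intros; eapply integrand_nonneg; eauto. }
  assert (HRf : Rf t' x' < 0).
  { assert (Hc : cQ d T Om t' x') by (split; [lra|auto]).
    specialize (H1 t' x' Hc ltac:(lra)). apply Rabs_def2 in H1. lra. }
  assert (Hphi' : phi t' x' < 0).
  { assert (Hc : cQ d T Om t' x') by (split; [lra|auto]).
    specialize (H2 t' x' Hc ltac:(lra)). apply Rabs_def2 in H2. lra. }
  unfold Rf in HRf. rewrite Heqn in HRf. nra.
Qed.


Theorem lemma3p1
  (d : nat) (T r0 K A0 : R)
  (Om : (nat -> R) -> Prop) (n : (nat -> R) -> nat -> R)
  (A tau taud eta : R -> R)
  (beta : R -> (nat -> R) -> (nat -> nat -> R) -> R)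
  (v vt : nat -> R -> (nat -> R) -> R) (vx : nat -> nat -> R -> (nat -> R) -> R)
  (psi psit psir : R -> (nat -> R) -> R -> R)
  (psix : nat -> R -> (nat -> R) -> R -> R)
  (psixx : nat -> nat -> R -> (nat -> R) -> R -> R)
  (phi phit : R -> (nat -> R) -> R)
  (phix : nat -> R -> (nat -> R) -> R)
  (phixx : nat -> nat -> R -> (nat -> R) -> R)
  (Hd : d = 2%nat \/ d = 3%nat)
  (HT : 0 < T) (Hr0 : 0 < r0) (HK : 0 < K) (HA0 : 0 < A0)
  (HOm : bounded_domain d Om)
  (Hn : C11_boundary_normal d Om n)
  (HA1 : hypA1 r0 A)
  (HA2 : hypA2 r0 K tau taud)
  (HA3 : hypA3 d r0 K beta eta)
  (* (A4) is built into [kappa] *)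
  (Hv : reg_v d T Om v vt vx)
  (Hdiv : forall t x, oQ T Om t x -> sumd d (fun i => vx i i t x) = 0)
  (Hvn : forall t x, 0 < t < T -> bdry d Om x -> sumd d (fun i => v i t x * n x i) = 0)
  (Hpsi : reg_psi d T Om r0 psi psit psir psix psixx)
  (Hphi : reg_phi d T Om phi phit phix phixx)
  (Hpsin : forall t x r, 0 < t < T -> bdry d Om x -> r0 < r ->
            sumd d (fun i => psix i t x r * n x i) = 0)
  (Hphin : forall t x, 0 < t < T -> bdry d Om x ->
            sumd d (fun i => phix i t x * n x i) = 0)
  (Hpsi0 : forall x r, closure d Om x -> r0 <= r -> 0 <= psi 0 x r)
  (Hphi0 : forall x, closure d Om x -> 0 <= phi 0 x)
  (Heqpsi : ae_txr d (oQR T Om r0) (fun t x r =>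
      exists l I,
        derivable_pt_lim (fun s => pos (psi t x s)) r l /\
        HKint_inf (fun rt => beta rt (vecv d v t x) (symgrad d vx t x)
                              * kappa r0 r rt * pos (psi t x rt)) r I /\
        psit t x r + sumd d (fun i => v i t x * psix i t x r)
          - A r * sumd d (fun i => psixx i i t x r)
        = - beta r (vecv d v t x) (symgrad d vx t x) * psi t x r
          - tau r * phi t x * l + 2 * I))
  (Heqphi : ae_tx d (oQ T Om) (fun t x =>
      exists I1 (J : R -> R) I2,
        HKint_inf (fun r => (tau r + r * taud r) * pos (psi t x r)) r0 I1 /\
        (forall r, 0 < r < r0 ->
           HKint_inf (fun rt => beta rt (vecv d v t x) (symgrad d vx t x)
                                 * kappa r0 r rt * pos (psi t x rt)) r0 (J r)) /\
        HKint (fun r => r * J r) 0 r0 I2 /\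
        phit t x + sumd d (fun i => v i t x * phix i t x)
          - A0 * sumd d (fun i => phixx i i t x)
        = - phi t x * I1 + 2 * I2)) :
  ae_txr d (oQR T Om r0) (fun t x r => 0 <= psi t x r) /\
  ae_tx d (oQ T Om) (fun t x => 0 <= phi t x).
Proof.
  split.
  - unfold ae_txr, ae_on. apply null_none; [lia|]. intros z [HD HnP]. apply HnP.
    set (t := z O) in *. set (x := zx d z) in *. set (r := z (S d)) in *.
    clearbody t x r. clear HnP.
    destruct HD as [Hox Hr].
    pose proof Hpsi as Hpsi_c. destruct Hpsi_c as [[Cpsi [Cpsit [Cpsir [Cpsix Cpsixx]]]] [Hder _]].
    apply (maxprin d T Om n (fun t x => psi t x r) (fun t x => psit t x r) (fun i t x => psix i t x r)
             (fun i j t x => psixx i j t x r) v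
             (fun t x => psit t x r + sumd d (fun i => v i t x * psix i t x r) - A r * sumd d (fun i => psixx i i t x r))
             (A r)); auto.
    + destruct HA1 as [HA _]. apply Rlt_le, HA; auto.
    + apply (cont3_slice d T Om r0); auto; lra.
    + apply (cont3_slice d T Om r0); auto; lra.
    + intros i Hi. apply (cont3_slice d T Om r0); auto; lra.
    + intros i j Hi Hj. apply (cont3_slice d T Om r0); auto; lra.
    + apply (cont2_res d T Om (fun t x => psit t x r) (fun i t x => psix i t x r) v (fun i t x => psixx i i t x r)).
      * apply (cont3_slice d T Om r0); auto; lra.
      * intros i Hi. apply (proj1 Hv); auto.
      * intros i Hi. apply (cont3_slice d T Om r0); auto; lra.
      * intros i Hi. apply (cont3_slice d T Om r0); auto; lra.
    + intros t' x' Ho. destruct (Hder t' x' r (conj Ho Hr)) as [H1 [H2 [H3 H4]]]. auto.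
    + intros x' Hx'. apply Hpsi0; auto; lra.
    + intros t' x' Ho Hneg.
      apply (psi_res d T r0 K Om A tau eta beta v vt vx psi psit psir psix psixx phi); auto.
  - unfold ae_tx, ae_on. apply null_none; [lia|]. intros z [HD HnP]. apply HnP.
    set (t := z O) in *. set (x := zx d z) in *. clearbody t x. clear HnP.
    pose proof Hphi as Hphi_c. destruct Hphi_c as [[Cphi [Cphit [Cphix Cphixx]]] Hder].
    apply (maxprin d T Om n phi phit phix phixx v
             (fun t x => phit t x + sumd d (fun i => v i t x * phix i t x) - A0 * sumd d (fun i => phixx i i t x))
             A0); auto.
    + lra.
    + apply (cont2_res d T Om phit phix v (fun i t x => phixx i i t x)); [auto| intros i Hi; apply (proj1 Hv); auto| auto| intros i Hi; apply Cphixx; auto].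
    + intros t' x' Ho Hneg.
      apply (phi_res d T r0 K A0 Om tau taud eta beta v vt vx psi phi phit phix phixx); auto.
Qed.
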